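(* Let $\Lambda\in(\mathbb{R}\setminus\{0\})^n$, $P\in\mathrm{Lip}_{\mathcal{X}}(\mathbb{C}^n,\mathbb{C}^n)$, $R>0$ with $\mathcal{X}(2R)>0$, and $\theta=R/\mathcal{X}(2R)$. For $v_0\in\bar B_R$ and $0<\epsilon\le1$, let $a^\epsilon(\tau)$, $|\tau|\le\theta$, be the solution of $$\frac{\partial a}{\partial\tau}=\Phi_{\tau\epsilon^{-1}\Lambda}P(\Phi_{-\tau\epsilon^{-1}\Lambda}a),\qquad a(0)=v_0.$$ Define $I(\tau)=\int_0^\tau\big(y^{s\epsilon^{-1}}(a^\epsilon(s))-\langle\langle P\rangle\rangle(a^\epsilon(s))\big)\,ds$. Then there is a function $\kappa(\epsilon)$, depending only on $R,\Lambda,P,\mathcal{X}$ (not on $v_0\in\bar B_R$), with $\kappa(\epsilon)\to0$ as $\epsilon\to0$, such that $|I(\tau)|\le\kappa(\epsilon)$ for all $|\tau|\le\theta$.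
   Context: $B_R=\{v:|v|<R\}$. For a non-decreasing continuous $\mathcal{X}:\mathbb{R}_+\to\mathbb{R}_+$, $\mathrm{Lip}_{\mathcal{X}}(\mathbb{C}^n,\mathbb{C}^n)$ is the set of continuous vector fields $f$ with $\sup_{B_R}|f|\le\mathcal{X}(R)$ and $\mathrm{Lip}(f|_{B_R})\le\mathcal{X}(R)$ for all $R\ge0$. $\Phi_w=\mathrm{diag}(e^{\mathbf{i}w_1},\dots,e^{\mathbf{i}w_n})$; $y^t(a)=\Phi_{\Lambda t}P(\Phi_{-\Lambda t}a)$; $\langle\langle P\rangle\rangle(a)=\lim_{T\to\pm\infty}\frac1{|T|}\int_0^Ty^t(a)\,dt$ (this limit exists). The solution $a^\epsilon$ exists on $|\tau|\le\theta$ and stays in $\bar B_{2R}$. *)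

(* Defs.v *)
From Stdlib Require Import Reals Lra ClassicalEpsilon.
Open Scope R_scope.

(* Complex numbers as pairs (Re, Im). *)
Definition C : Type := (R * R)%type.
Definition cadd (z w : C) : C := (fst z + fst w, snd z + snd w).
Definition csub (z w : C) : C := (fst z - fst w, snd z - snd w).
Definition cmul (z w : C) : C :=
  (fst z * fst w - snd z * snd w, fst z * snd w + snd z * fst w).
Definition cnorm2 (z : C) : R := fst z * fst z + snd z * snd z.
Definition expi (w : R) : C := (cos w, sin w).

(* Vectors of C^n: only the components k < n are meaningful. *)
Definition vec : Type := nat -> C.

Fixpoint sumR (n : nat) (f : nat -> R) : R :=
  match n with O => 0 | S m => sumR m f + f m end.

Definition vnorm (n : nat) (v : vec) : R := sqrt (sumR n (fun k => cnorm2 (v k))).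
Definition vsub (u v : vec) : vec := fun k => csub (u k) (v k).

(* A map vec -> vec that is a genuine map C^n -> C^n: its first n output
   components depend only on the first n input components. *)
Definition respects (n : nat) (f : vec -> vec) : Prop :=
  forall u v : vec, (forall k, (k < n)%nat -> u k = v k) ->
    forall k, (k < n)%nat -> f u k = f v k.

Definition nondecr_cont_nonneg (X : R -> R) : Prop :=
  (forall x, 0 <= x -> 0 <= X x) /\
  (forall x y, 0 <= x -> x <= y -> X x <= X y) /\
  (forall x, 0 <= x -> forall e, 0 < e -> exists d, 0 < d /\
     forall y, 0 <= y -> Rabs (y - x) < d -> Rabs (X y - X x) < e).

Definition Lip_X (n : nat) (X : R -> R) (f : vec -> vec) : Prop :=
  respects n f /\
  (forall v e, 0 < e -> exists d, 0 < d /\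
     forall u, vnorm n (vsub u v) < d -> vnorm n (vsub (f u) (f v)) < e) /\
  (forall r, 0 <= r ->
     (forall v, vnorm n v < r -> vnorm n (f v) <= X r) /\
     (forall u v, vnorm n u < r -> vnorm n v < r ->
        vnorm n (vsub (f u) (f v)) <= X r * vnorm n (vsub u v))).

Definition Phi (w : nat -> R) (a : vec) : vec := fun k => cmul (expi (w k)) (a k).

Definition yflow (Lam : nat -> R) (P : vec -> vec) (t : R) (a : vec) : vec :=
  Phi (fun k => Lam k * t) (P (Phi (fun k => - (Lam k * t)) a)).

(* Oriented Riemann integral of a real function (value arbitrary if the
   function is not Riemann integrable; independent of the proof otherwise). *)
Definition RInt (f : R -> R) (lo hi : R) : R :=
  epsilon (inhabits 0)
    (fun r => exists pr : Riemann_integrable f lo hi, RiemannInt pr = r).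

Definition vint (g : R -> vec) (lo hi : R) : vec :=
  fun k => (RInt (fun s => fst (g s k)) lo hi, RInt (fun s => snd (g s k)) lo hi).

Definition is_average (n : nat) (Lam : nat -> R) (P : vec -> vec) (a v : vec) : Prop :=
  forall k, (k < n)%nat ->
  forall e, 0 < e -> exists M, 0 < M /\
    forall T, M < Rabs T ->
      let I := vint (fun t => yflow Lam P t a) 0 T in
      Rabs (fst (I k) / T - fst (v k)) < e /\
      Rabs (snd (I k) / T - snd (v k)) < e.

Definition avgP (n : nat) (Lam : nat -> R) (P : vec -> vec) (a : vec) : vec :=
  epsilon (inhabits (fun _ => (0, 0))) (fun v => is_average n Lam P a v).

Definition deriv_within (f f' : R -> R) (lo hi : R) : Prop :=
  forall t, lo <= t <= hi -> forall e, 0 < e -> exists d, 0 < d /\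
    forall h, h <> 0 -> lo <= t + h <= hi -> Rabs h < d ->
      Rabs ((f (t + h) - f t) / h - f' t) < e.

Definition is_solution (n : nat) (Lam : nat -> R) (P : vec -> vec) (eps theta : R)
  (v0 : vec) (a : R -> vec) : Prop :=
  (forall k, (k < n)%nat -> a 0 k = v0 k) /\
  (forall k, (k < n)%nat ->
     deriv_within (fun t => fst (a t k))
                  (fun t => fst (yflow Lam P (t / eps) (a t) k)) (- theta) theta /\
     deriv_within (fun t => snd (a t k))
                  (fun t => snd (yflow Lam P (t / eps) (a t) k)) (- theta) theta).

Definition Ifun (n : nat) (Lam : nat -> R) (P : vec -> vec) (eps : R)
  (a : R -> vec) (tau : R) : vec :=
  vint (fun s => vsub (yflow Lam P (s / eps) (a s)) (avgP n Lam P (a s))) 0 tau.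

(* Main.v *)
Require Import Defs.
From Stdlib Require Import ZArith Reals Lra Lia Psatz ClassicalEpsilon Classical List FunctionalExtensionality.
From Coquelicot Require Import Coquelicot.
Open Scope R_scope.
Lemma sumR_ext n f g : (forall k, (k < n)%nat -> f k = g k) -> sumR n f = sumR n g.
Proof. induction n; simpl; intros H; auto. rewrite IHn; [rewrite H|]; auto; intros; apply H; lia. Qed.
Lemma sumR_le n f g : (forall k, (k < n)%nat -> f k <= g k) -> sumR n f <= sumR n g.
Proof. induction n; simpl; intros H; [lra|]. assert (f n <= g n) by (apply H; lia).
 assert (sumR n f <= sumR n g) by (apply IHn; intros; apply H; lia). lra. Qed.
Lemma sumR_nonneg n f : (forall k, (k < n)%nat -> 0 <= f k) -> 0 <= sumR n f.
Proof. intros H. replace 0 with (sumR n (fun _ => 0)). apply sumR_le; auto.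
 induction n; simpl; auto. rewrite IHn; [lra|]. intros; apply H; lia. Qed.
Lemma sumR_plus n f g : sumR n (fun k => f k + g k) = sumR n f + sumR n g.
Proof. induction n; simpl; [lra|]. rewrite IHn; lra. Qed.
Lemma sumR_scal n c f : sumR n (fun k => c * f k) = c * sumR n f.
Proof. induction n; simpl; [lra|]. rewrite IHn; lra. Qed.
Lemma sumR_const n c : sumR n (fun _ => c) = INR n * c.
Proof. induction n; simpl sumR; [simpl; lra|]. rewrite IHn, S_INR; lra. Qed.
Lemma sumR_term_le n f k : (forall j, (j < n)%nat -> 0 <= f j) -> (k < n)%nat -> f k <= sumR n f.
Proof. induction n; intros H Hk; [lia|]. simpl.
 assert (0 <= sumR n f) by (apply sumR_nonneg; intros; apply H; lia).
 destruct (Nat.eq_dec k n). subst; lra.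
 assert (f k <= sumR n f) by (apply IHn; [intros; apply H|]; lia). assert (0 <= f n) by (apply H; lia). lra. Qed.
Lemma sumR_abs n f : Rabs (sumR n f) <= sumR n (fun k => Rabs (f k)).
Proof. induction n; simpl. rewrite Rabs_R0; lra. eapply Rle_trans; [apply Rabs_triang|]. lra. Qed.

Lemma CS_step A B C x1 x2 y1 y2 : 0 <= B -> 0 <= C -> A*A <= B*C ->
  (A + (x1*y1+x2*y2))*(A + (x1*y1+x2*y2)) <= (B + (x1*x1+x2*x2))*(C+(y1*y1+y2*y2)).
Proof. intros HB HC HA. set (p := x1*y1+x2*y2). set (b := x1*x1+x2*x2). set (c := y1*y1+y2*y2).
 assert (Hp : p*p <= b*c) by (unfold p,b,c; pose proof (Rle_0_sqr (x1*y2-x2*y1)); unfold Rsqr in *; nra).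
 assert (0 <= b) by (unfold b; nra). assert (0 <= c) by (unfold c; nra).
 assert (H4: (2*A*p)*(2*A*p) <= (B*c + C*b)*(B*c+C*b)).
 { assert (A*A*(p*p) <= B*C*(b*c)) by (apply Rmult_le_compat; auto; apply Rle_0_sqr). pose proof (Rle_0_sqr (B*c-C*b)); unfold Rsqr in *; nra. }
 assert (2*A*p <= B*c + C*b).
 { destruct (Rle_dec (2*A*p) 0). nra. apply Rsqr_incr_0_var; unfold Rsqr; nra. }
 nra. Qed.

Definition dotv (n : nat) (u v : vec) : R :=
  sumR n (fun k => fst (u k) * fst (v k) + snd (u k) * snd (v k)).
Definition sqv (n : nat) (u : vec) : R := sumR n (fun k => cnorm2 (u k)).

Lemma sqv_nonneg n u : 0 <= sqv n u.
Proof. apply sumR_nonneg; intros; unfold cnorm2; nra. Qed.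
Lemma CS n u v : dotv n u v * dotv n u v <= sqv n u * sqv n v.
Proof. unfold dotv, sqv, cnorm2. induction n; simpl; [lra|].
 apply CS_step; auto; apply sumR_nonneg; intros; nra. Qed.

Lemma vnorm_sq n u : vnorm n u = sqrt (sqv n u).
Proof. reflexivity. Qed.
Lemma vnorm_nonneg n u : 0 <= vnorm n u.
Proof. apply sqrt_pos. Qed.
Lemma vnorm_sqr n u : vnorm n u * vnorm n u = sqv n u.
Proof. apply sqrt_sqrt, sqv_nonneg. Qed.
Lemma dot_self n u : dotv n u u = sqv n u.
Proof. apply sumR_ext; intros; unfold cnorm2; ring. Qed.
Lemma CS_abs n u v : Rabs (dotv n u v) <= vnorm n u * vnorm n v.
Proof. assert (H := CS n u v). rewrite <- (vnorm_sqr n u), <- (vnorm_sqr n v) in H.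
 pose proof (vnorm_nonneg n u); pose proof (vnorm_nonneg n v).
 apply Rsqr_incr_0_var. rewrite <- Rsqr_abs; unfold Rsqr; nra. nra. Qed.

Lemma le_sqrt_sq x y : 0 <= y -> x * x <= y * y -> x <= y.
Proof. intros. destruct (Rle_dec x 0). lra. apply Rsqr_incr_0_var; unfold Rsqr; lra. Qed.
Lemma sqrt_le_of x y : 0 <= y -> x <= y * y -> sqrt x <= y.
Proof. intros Hy H. destruct (Rle_dec x 0). rewrite sqrt_neg_0; auto.
 apply le_sqrt_sq; auto. rewrite sqrt_sqrt; lra. Qed.

Lemma vnorm_ext n u v : (forall k, (k < n)%nat -> u k = v k) -> vnorm n u = vnorm n v.
Proof. intros H; unfold vnorm; f_equal; apply sumR_ext; intros; rewrite H; auto. Qed.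

Lemma comp_le_fst n v k : (k < n)%nat -> Rabs (fst (v k)) <= vnorm n v.
Proof. intros Hk. apply le_sqrt_sq. apply vnorm_nonneg. rewrite vnorm_sqr.
 assert (cnorm2 (v k) <= sqv n v) by (apply sumR_term_le with (f := fun k => cnorm2 (v k)); auto; intros; unfold cnorm2; nra).
 unfold cnorm2 in *. rewrite <- Rabs_mult, Rabs_pos_eq; nra. Qed.
Lemma comp_le_snd n v k : (k < n)%nat -> Rabs (snd (v k)) <= vnorm n v.
Proof. intros Hk. apply le_sqrt_sq. apply vnorm_nonneg. rewrite vnorm_sqr.
 assert (cnorm2 (v k) <= sqv n v) by (apply sumR_term_le with (f := fun k => cnorm2 (v k)); auto; intros; unfold cnorm2; nra).
 unfold cnorm2 in *. rewrite <- Rabs_mult, Rabs_pos_eq; nra. Qed.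

Lemma vnorm_le_sum n v : vnorm n v <= sumR n (fun k => Rabs (fst (v k)) + Rabs (snd (v k))).
Proof. unfold vnorm. induction n; simpl. rewrite sqrt_0; lra.
 apply sqrt_le_of. pose proof (sumR_nonneg n (fun k => Rabs (fst (v k)) + Rabs (snd (v k))) ltac:(intros; pose proof (Rabs_pos (fst (v k))); pose proof (Rabs_pos (snd (v k))); lra)).
 pose proof (Rabs_pos (fst (v n))); pose proof (Rabs_pos (snd (v n))); lra.
 set (A := sumR n (fun k => cnorm2 (v k))) in *. set (B := sumR n _) in *.
 assert (HA : 0 <= A) by (apply sumR_nonneg; intros; unfold cnorm2; nra).
 assert (sqrt A * sqrt A = A) by (apply sqrt_sqrt; auto).
 pose proof (sqrt_pos A).
 assert (cnorm2 (v n) = Rabs (fst (v n)) * Rabs (fst (v n)) + Rabs (snd (v n)) * Rabs (snd (v n))).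
 { unfold cnorm2. rewrite <- !Rabs_mult, !Rabs_pos_eq; nra. }
 pose proof (Rabs_pos (fst (v n))); pose proof (Rabs_pos (snd (v n))). nra. Qed.

Lemma sqv_add n u v : sqv n (fun k => cadd (u k) (v k)) = sqv n u + 2 * dotv n u v + sqv n v.
Proof. unfold sqv, dotv. rewrite <- sumR_scal, <- !sumR_plus. apply sumR_ext; intros; unfold cnorm2, cadd; simpl; ring. Qed.

Lemma vnorm_triang n u v : vnorm n (fun k => cadd (u k) (v k)) <= vnorm n u + vnorm n v.
Proof. apply sqrt_le_of. pose proof (vnorm_nonneg n u); pose proof (vnorm_nonneg n v); lra.
 change (sqv n (fun k => cadd (u k) (v k)) <= (vnorm n u + vnorm n v) * (vnorm n u + vnorm n v)). rewrite sqv_add. pose proof (CS_abs n u v). rewrite <- (vnorm_sqr n u), <- (vnorm_sqr n v).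
 pose proof (Rle_abs (dotv n u v)). nra. Qed.

Lemma vnorm_triang_sub n u v w : vnorm n (vsub u w) <= vnorm n (vsub u v) + vnorm n (vsub v w).
Proof. eapply Rle_trans; [|apply vnorm_triang]. right. apply vnorm_ext; intros.
 unfold vsub, csub, cadd; simpl. f_equal; ring. Qed.

Lemma vnorm_sub_le n u v : vnorm n u <= vnorm n v + vnorm n (vsub u v).
Proof. eapply Rle_trans; [|apply vnorm_triang]. right. apply vnorm_ext; intros.
 unfold vsub, csub, cadd; simpl. destruct (u k); simpl; f_equal; ring. Qed.

Lemma vnorm_sub_sym n u v : vnorm n (vsub u v) = vnorm n (vsub v u).
Proof. unfold vnorm; f_equal; apply sumR_ext; intros; unfold vsub, csub, cnorm2; simpl; ring. Qed.

Lemma cnorm2_expi_mul w z : cnorm2 (cmul (expi w) z) = cnorm2 z.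
Proof. unfold cnorm2, cmul, expi; simpl. pose proof (sin2_cos2 w). unfold Rsqr in *. nra. Qed.
Lemma vnorm_Phi n w u : vnorm n (Phi w u) = vnorm n u.
Proof. unfold vnorm, Phi; f_equal; apply sumR_ext; intros; apply cnorm2_expi_mul. Qed.
Lemma Phi_sub w u v : vsub (Phi w u) (Phi w v) = Phi w (vsub u v).
Proof. unfold vsub, Phi, csub, cmul; simpl. apply functional_extensionality; intros k. f_equal; ring. Qed.
Lemma vnorm_Phi_sub n w u v : vnorm n (vsub (Phi w u) (Phi w v)) = vnorm n (vsub u v).
Proof. rewrite Phi_sub; apply vnorm_Phi. Qed.
Lemma expi_add x y : cmul (expi x) (expi y) = expi (x + y).
Proof. unfold cmul, expi; simpl. rewrite cos_plus, sin_plus. f_equal; ring. Qed.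
Lemma cmul_assoc a b c : cmul a (cmul b c) = cmul (cmul a b) c.
Proof. unfold cmul; simpl; f_equal; ring. Qed.
Lemma Phi_Phi w1 w2 u : Phi w1 (Phi w2 u) = Phi (fun k => w1 k + w2 k) u.
Proof. unfold Phi; apply functional_extensionality; intros k. rewrite cmul_assoc, expi_add; auto. Qed.
Lemma CI (lo hi : R) (Q : R -> Prop) : lo <= hi -> Q lo ->
 (forall s, lo <= s < hi -> (forall t, lo <= t <= s -> Q t) ->
    exists eta, 0 < eta /\ forall t, s < t <= hi -> t < s + eta -> Q t) ->
 (forall s, lo < s <= hi -> (forall t, lo <= t < s -> Q t) -> Q s) ->
 forall t, lo <= t <= hi -> Q t.
Proof.
 intros Hle Q0 Hfw Hcl.
 set (E := fun x => lo <= x <= hi /\ forall t, lo <= t <= x -> Q t).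
 assert (Hb : bound E) by (exists hi; intros x [Hx _]; lra).
 assert (He : exists x, E x) by (exists lo; split; [lra|]; intros t Ht; replace t with lo by lra; auto).
 destruct (completeness E Hb He) as [m [Hub Hlub]].
 assert (Hlm : lo <= m) by (apply Hub; destruct He as [x Hx]; split; [lra|]; intros t Ht; replace t with lo by lra; auto).
 assert (Hmh : m <= hi) by (apply Hlub; intros x [Hx _]; lra).
 assert (G : forall t, lo <= t < m -> Q t).
 { intros t Ht. destruct (classic (exists x, E x /\ t < x)) as [[x [[Hx1 Hx2] Htx]]|Hn].
   apply Hx2; lra.
   exfalso. assert (m <= t); [|lra]. apply Hlub. intros x Ex. destruct (Rle_dec x t); auto.
   exfalso; apply Hn; exists x; split; auto; lra. }
 assert (Gm : forall t, lo <= t <= m -> Q t).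
 { intros t Ht. destruct (Rlt_dec t m). apply G; lra. replace t with m by lra.
   destruct (Req_dec m lo). subst m; auto. apply Hcl. lra. auto. }
 assert (m = hi).
 { destruct (Req_dec m hi); auto. exfalso.
   destruct (Hfw m ltac:(lra) Gm) as [eta [Heta Hq]].
   set (x := Rmin (m + eta/2) hi).
   assert (E x). { split. unfold x; unfold Rmin; destruct Rle_dec; lra.
     intros t Ht. destruct (Rle_dec t m). apply Gm; lra. apply Hq; unfold x, Rmin in *; destruct Rle_dec; lra. }
   assert (x <= m) by (apply Hub; auto). unfold x, Rmin in *; destruct Rle_dec; lra. }
 subst m. intros t Ht; apply Gm; lra.
Qed.

Definition cont_within (f : R -> R) (lo hi : R) : Prop :=
  forall t, lo <= t <= hi -> forall e, 0 < e -> exists d, 0 < d /\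
    forall t', lo <= t' <= hi -> Rabs (t' - t) < d -> Rabs (f t' - f t) < e.

Lemma dw_cont f f' lo hi : deriv_within f f' lo hi -> cont_within f lo hi.
Proof.
 intros H t Ht e He. destruct (H t Ht 1 Rlt_0_1) as [d [Hd Hh]].
 set (K := Rabs (f' t) + 1).
 assert (HK : 0 < K) by (unfold K; pose proof (Rabs_pos (f' t)); lra).
 exists (Rmin d (e / K)). split. apply Rmin_pos; auto. apply Rdiv_lt_0_compat; auto.
 intros t' Ht' Hd'. destruct (Req_dec t' t). subst; rewrite Rminus_eq_0, Rabs_R0; auto.
 specialize (Hh (t' - t) ltac:(lra) ltac:(replace (t + (t' - t)) with t' by ring; auto)
   ltac:(apply Rlt_le_trans with (1 := Hd'); apply Rmin_l)).
 replace (t + (t' - t)) with t' in Hh by ring.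
 assert (Hq : Rabs ((f t' - f t) / (t' - t)) < K).
 { unfold K. eapply Rle_lt_trans. 2: apply Rplus_lt_compat_l, Hh.
   replace ((f t' - f t) / (t' - t)) with (f' t + ((f t' - f t) / (t' - t) - f' t)) at 1 by ring.
   apply Rabs_triang. }
 replace (f t' - f t) with ((f t' - f t) / (t' - t) * (t' - t)) by (field; lra).
 rewrite Rabs_mult. assert (Rabs (t' - t) < e / K) by (apply Rlt_le_trans with (1 := Hd'); apply Rmin_r).
 apply Rle_lt_trans with (K * Rabs (t' - t)). apply Rmult_le_compat_r. apply Rabs_pos. lra.
 apply Rmult_lt_reg_r with (/ K). apply Rinv_0_lt_compat; auto.
 replace (K * Rabs (t' - t) * / K) with (Rabs (t' - t)) by (field; lra). lra.
Qed.

Lemma dw_upper f f' lo hi M : deriv_within f f' lo hi -> (forall t, lo <= t <= hi -> f' t <= M) ->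
  forall x y, lo <= x -> x <= y -> y <= hi -> f y - f x <= M * (y - x).
Proof.
 intros Hd HM x y Hx Hxy Hy. apply le_epsilon. intros ee Hee.
 set (eps := ee / (y - x + 1)).
 assert (Heps : 0 < eps) by (unfold eps; apply Rdiv_lt_0_compat; lra).
 assert (Hc := dw_cont _ _ _ _ Hd).
 assert (Main : forall t, x <= t <= hi -> f t - f x <= (M + eps) * (t - x)).
 { apply CI. lra. lra.
   - intros s Hs IH. destruct (Hd s ltac:(lra) eps Heps) as [d [Hd0 Hh]].
     exists d. split; auto. intros t Ht1 Ht2.
     specialize (Hh (t - s) ltac:(lra) ltac:(replace (s + (t - s)) with t by ring; lra) ltac:(rewrite Rabs_pos_eq; lra)).
     replace (s + (t - s)) with t in Hh by ring.
     assert (Hq : (f t - f s) / (t - s) < M + eps).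
     { apply Rabs_lt_between in Hh. assert (f' s <= M) by (apply HM; lra). lra. }
     assert (f t - f s <= (M + eps) * (t - s)).
     { apply Rmult_lt_compat_r with (r := t - s) in Hq; [|lra].
       replace ((f t - f s) / (t - s) * (t - s)) with (f t - f s) in Hq by (field; lra). lra. }
     assert (f s - f x <= (M + eps) * (s - x)) by (apply IH; lra). nra.
   - intros s Hs IH. apply Rnot_lt_le. intros Hlt.
     set (g := f s - f x - (M + eps) * (s - x)).
     assert (Hg : 0 < g) by (unfold g; lra).
     set (K := Rabs (M + eps) + 1).
     assert (HK : 0 < K) by (unfold K; pose proof (Rabs_pos (M + eps)); lra).
     destruct (Hc s ltac:(lra) (g/2) ltac:(lra)) as [d [Hd0 Hcs]].
     set (t := Rmax x (s - Rmin (d/2) (g / (2*K)))).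
     assert (Hm1 : 0 < Rmin (d/2) (g/(2*K))) by (apply Rmin_pos; [lra| apply Rdiv_lt_0_compat; lra]).
     assert (Hm2 : Rmin (d/2) (g/(2*K)) <= d/2) by apply Rmin_l.
     assert (Hm3 : Rmin (d/2) (g/(2*K)) <= g/(2*K)) by apply Rmin_r.
     assert (Ht : x <= t < s) by (unfold t, Rmax; destruct Rle_dec; lra).
     assert (Hst : s - t <= g / (2*K)) by (unfold t, Rmax; destruct Rle_dec; lra).
     specialize (Hcs t ltac:(lra) ltac:(rewrite Rabs_left; unfold t, Rmax in *; destruct Rle_dec; lra)).
     specialize (IH t Ht). apply Rabs_lt_between in Hcs.
     assert (Rabs (M+eps) * (s - t) <= g/2).
     { apply Rle_trans with (K * (s - t)). apply Rmult_le_compat_r; unfold K; lra.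
       apply Rle_trans with (K * (g/(2*K))). apply Rmult_le_compat_l; lra. right; field; lra. }
     assert (- (M + eps) * (s - t) <= Rabs (M+eps) * (s-t)) by (apply Rmult_le_compat_r; [lra| rewrite <- Rabs_Ropp; apply Rle_abs]).
     assert (- (M + eps) * (s - t) = - ((M + eps) * (s - t))) by ring.
     assert ((M+eps)*(t-x) = (M+eps)*(s-x) - (M+eps)*(s-t)) by ring.
     unfold g in *. lra. }
 specialize (Main y ltac:(lra)).
 assert (eps * (y - x) <= ee).
 { unfold eps. apply Rle_trans with (ee / (y - x + 1) * (y - x + 1)). apply Rmult_le_compat_l. apply Rlt_le, Rdiv_lt_0_compat; lra. lra.
   right; field; lra. }
 nra.
Qed.

Lemma dw_opp f f' lo hi : deriv_within f f' lo hi -> deriv_within (fun t => - f t) (fun t => - f' t) lo hi.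
Proof. intros H t Ht e He. destruct (H t Ht e He) as [d [Hd Hh]]. exists d; split; auto.
 intros h H1 H2 H3. specialize (Hh h H1 H2 H3).
 replace ((- f (t+h) - - f t) / h - - f' t) with (- ((f (t+h) - f t) / h - f' t)) by (field; auto).
 rewrite Rabs_Ropp; auto. Qed.

Lemma dw_lip f f' lo hi M : deriv_within f f' lo hi -> (forall t, lo <= t <= hi -> Rabs (f' t) <= M) ->
  forall x y, lo <= x <= hi -> lo <= y <= hi -> Rabs (f y - f x) <= M * Rabs (y - x).
Proof.
 intros Hd HM.
 assert (K : forall x y, lo <= x -> x <= y -> y <= hi -> Rabs (f y - f x) <= M * (y - x)).
 { intros x y H1 H2 H3. apply Rabs_le. split.
   - assert (H := dw_upper _ _ _ _ M (dw_opp _ _ _ _ Hd) ltac:(intros t Ht; specialize (HM t Ht); apply Rabs_le_between in HM; lra) x y H1 H2 H3). lra.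
   - apply (dw_upper _ _ _ _ M Hd); auto. intros t Ht; specialize (HM t Ht); apply Rabs_le_between in HM; lra. }
 intros x y Hx Hy. destruct (Rle_dec x y).
 rewrite (Rabs_pos_eq (y - x)) by lra. apply K; lra.
 rewrite Rabs_minus_sym, (Rabs_left (y - x)) by lra. replace (- (y - x)) with (x - y) by ring. apply K; lra.
Qed.

Lemma dw_plus f f' g g' lo hi : deriv_within f f' lo hi -> deriv_within g g' lo hi ->
  deriv_within (fun t => f t + g t) (fun t => f' t + g' t) lo hi.
Proof. intros Hf Hg t Ht e He. destruct (Hf t Ht (e/2) ltac:(lra)) as [d1 [Hd1 H1]].
 destruct (Hg t Ht (e/2) ltac:(lra)) as [d2 [Hd2 H2]].
 exists (Rmin d1 d2); split. apply Rmin_pos; auto.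
 intros h Hh Hr Ha. assert (Ha1 : Rabs h < d1) by (eapply Rlt_le_trans; [exact Ha|apply Rmin_l]).
 assert (Ha2 : Rabs h < d2) by (eapply Rlt_le_trans; [exact Ha|apply Rmin_r]).
 specialize (H1 h Hh Hr Ha1). specialize (H2 h Hh Hr Ha2).
 replace ((f (t+h) + g (t+h) - (f t + g t)) / h - (f' t + g' t)) with
   (((f (t+h) - f t) / h - f' t) + ((g (t+h) - g t)/h - g' t)) by (field; auto).
 eapply Rle_lt_trans; [apply Rabs_triang|]. lra. Qed.

Lemma dw_scal c f f' lo hi : deriv_within f f' lo hi ->
  deriv_within (fun t => c * f t) (fun t => c * f' t) lo hi.
Proof. intros Hf t Ht e He.
 destruct (Hf t Ht (e / (Rabs c + 1))) as [d [Hd H]]. apply Rdiv_lt_0_compat; [lra|pose proof (Rabs_pos c); lra].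
 exists d; split; auto. intros h H1 H2 H3. specialize (H h H1 H2 H3).
 replace ((c * f (t+h) - c * f t) / h - c * f' t) with (c * ((f (t+h) - f t) / h - f' t)) by (field; auto).
 rewrite Rabs_mult. pose proof (Rabs_pos c).
 apply Rle_lt_trans with ((Rabs c + 1) * Rabs ((f (t + h) - f t) / h - f' t)).
 apply Rmult_le_compat_r; [apply Rabs_pos|lra].
 apply Rmult_lt_reg_r with (/ (Rabs c + 1)). apply Rinv_0_lt_compat; lra.
 replace ((Rabs c + 1) * Rabs ((f (t + h) - f t) / h - f' t) * / (Rabs c + 1)) with (Rabs ((f (t + h) - f t) / h - f' t)) by (field; lra).
 unfold Rdiv in H; lra. Qed.

Lemma dw_const c lo hi : deriv_within (fun _ => c) (fun _ => 0) lo hi.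
Proof. intros t Ht e He; exists 1; split; [lra|]. intros h H1 H2 H3.
 replace ((c - c) / h - 0) with 0 by (field; auto). rewrite Rabs_R0; auto. Qed.

Lemma dw_sum n F F' lo hi : (forall k, (k < n)%nat -> deriv_within (F k) (F' k) lo hi) ->
  deriv_within (fun t => sumR n (fun k => F k t)) (fun t => sumR n (fun k => F' k t)) lo hi.
Proof. induction n; intros H; simpl. apply dw_const.
 apply dw_plus. apply IHn; intros; apply H; lia. apply H; lia. Qed.

Lemma dw_sub f f' lo hi lo' hi' : deriv_within f f' lo hi -> lo <= lo' -> hi' <= hi ->
  deriv_within f f' lo' hi'.
Proof. intros H H1 H2 t Ht e He. destruct (H t ltac:(lra) e He) as [d [Hd Hh]].
 exists d; split; auto. intros h A B C; apply Hh; auto; lra. Qed.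
Lemma min_delta (n : nat) (Pd : nat -> R -> Prop) :
  (forall k d d', (k < n)%nat -> 0 < d' <= d -> Pd k d -> Pd k d') ->
  (forall k, (k < n)%nat -> exists d, 0 < d /\ Pd k d) ->
  exists d, 0 < d /\ forall k, (k < n)%nat -> Pd k d.
Proof. induction n; intros Hm H. exists 1; split; [lra|intros; lia].
 destruct IHn as [d1 [Hd1 H1]]. intros; apply (Hm k d d'); auto; lia. intros; apply H; lia.
 destruct (H n ltac:(lia)) as [d2 [Hd2 H2]].
 exists (Rmin d1 d2); split. apply Rmin_pos; auto. intros k Hk.
 destruct (Nat.eq_dec k n). subst. apply (Hm n d2); auto. split; [apply Rmin_pos; auto|apply Rmin_r].
 apply (Hm k d1); auto. split; [apply Rmin_pos; auto|apply Rmin_l]. apply H1; lia. Qed.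

Lemma yflow_norm n Lam P t b : vnorm n (yflow Lam P t b) = vnorm n (P (Phi (fun k => - (Lam k * t)) b)).
Proof. apply vnorm_Phi. Qed.

Lemma vcont n Lam P eps th v0 a : is_solution n Lam P eps th v0 a ->
  forall t, - th <= t <= th -> forall e, 0 < e -> exists d, 0 < d /\
   forall t', - th <= t' <= th -> Rabs (t' - t) < d -> vnorm n (vsub (a t') (a t)) < e.
Proof.
 intros [_ Hd] t Ht e He.
 set (e' := e / (2 * INR n + 1)).
 assert (He' : 0 < e') by (unfold e'; apply Rdiv_lt_0_compat; auto; pose proof (pos_INR n); lra).
 destruct (min_delta n (fun k d => forall t', - th <= t' <= th -> Rabs (t' - t) < d ->
    Rabs (fst (a t' k) - fst (a t k)) < e' /\ Rabs (snd (a t' k) - snd (a t k)) < e')) as [d [Hd0 Hdk]].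
 - intros k d d' Hk Hdd Hp t' H1 H2. apply Hp; auto. lra.
 - intros k Hk. destruct (Hd k Hk) as [D1 D2].
   destruct (dw_cont _ _ _ _ D1 t Ht e' He') as [d1 [Hd1 C1]].
   destruct (dw_cont _ _ _ _ D2 t Ht e' He') as [d2 [Hd2 C2]].
   exists (Rmin d1 d2); split. apply Rmin_pos; auto. intros t' H1 H2.
   split; [apply C1|apply C2]; auto; eapply Rlt_le_trans; eauto; [apply Rmin_l|apply Rmin_r].
 - exists d; split; auto. intros t' H1 H2.
   eapply Rle_lt_trans. apply vnorm_le_sum.
   apply Rle_lt_trans with (sumR n (fun _ => 2 * e')).
   apply sumR_le. intros k Hk. destruct (Hdk k Hk t' H1 H2). unfold vsub, csub; simpl. lra.
   rewrite sumR_const. unfold e'. apply Rmult_lt_reg_r with (2 * INR n + 1). pose proof (pos_INR n); lra.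
   replace (INR n * (2 * (e / (2 * INR n + 1))) * (2 * INR n + 1)) with (2 * INR n * e) by (field; pose proof (pos_INR n); lra).
   pose proof (pos_INR n). nra.
Qed.

Lemma vmvt n Lam P eps th v0 a B : is_solution n Lam P eps th v0 a -> 0 <= B ->
  forall x y, - th <= x <= th -> - th <= y <= th ->
  (forall s, Rmin x y <= s <= Rmax x y -> vnorm n (yflow Lam P (s / eps) (a s)) <= B) ->
  vnorm n (vsub (a y) (a x)) <= B * Rabs (y - x).
Proof.
 intros [_ Hd] HB x y Hx Hy Hs.
 set (u := vsub (a y) (a x)).
 set (f := fun s => sumR n (fun k => fst (u k) * fst (a s k) + snd (u k) * snd (a s k))).
 set (f' := fun s => sumR n (fun k => fst (u k) * fst (yflow Lam P (s / eps) (a s) k) + snd (u k) * snd (yflow Lam P (s / eps) (a s) k))).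
 assert (Df : deriv_within f f' (Rmin x y) (Rmax x y)).
 { apply dw_sub with (- th) th.
   apply (dw_sum n (fun k s => fst (u k) * fst (a s k) + snd (u k) * snd (a s k))
                   (fun k s => fst (u k) * fst (yflow Lam P (s / eps) (a s) k) + snd (u k) * snd (yflow Lam P (s / eps) (a s) k))).
   intros k Hk. destruct (Hd k Hk). apply dw_plus; apply dw_scal; auto.
   unfold Rmin; destruct Rle_dec; lra. unfold Rmax; destruct Rle_dec; lra. }
 assert (Hf' : forall s, Rmin x y <= s <= Rmax x y -> Rabs (f' s) <= vnorm n u * B).
 { intros s Hs'. unfold f'. change (Rabs (dotv n u (yflow Lam P (s / eps) (a s))) <= vnorm n u * B).
   eapply Rle_trans. apply CS_abs. apply Rmult_le_compat_l. apply vnorm_nonneg. apply Hs; auto. }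
 assert (L := dw_lip _ _ _ _ _ Df Hf' x y).
 assert (Hfd : f y - f x = sqv n u).
 { unfold f. rewrite <- dot_self. unfold dotv. replace (sumR n (fun k => fst (u k) * fst (a y k) + snd (u k) * snd (a y k)) - sumR n (fun k => fst (u k) * fst (a x k) + snd (u k) * snd (a x k))) with
    (sumR n (fun k => fst (u k) * fst (a y k) + snd (u k) * snd (a y k)) + (-1) * sumR n (fun k => fst (u k) * fst (a x k) + snd (u k) * snd (a x k))) by ring.
   rewrite <- sumR_scal, <- sumR_plus. apply sumR_ext; intros k _. unfold u, vsub, csub; simpl. ring. }
 rewrite Hfd in L. rewrite <- vnorm_sqr in L.
 assert (L' : Rabs (vnorm n u * vnorm n u) <= vnorm n u * B * Rabs (y - x)).
 { apply L; unfold Rmin, Rmax; destruct Rle_dec; lra. }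
 rewrite Rabs_pos_eq in L' by (pose proof (vnorm_nonneg n u); nra).
 pose proof (vnorm_nonneg n u). pose proof (Rabs_pos (y - x)).
 destruct (Req_dec (vnorm n u) 0) as [E|E]. rewrite E; nra.
 apply Rmult_le_reg_l with (vnorm n u). lra. nra.
Qed.

Lemma vnorm_sub_self n u : vnorm n (vsub u u) = 0.
Proof. unfold vnorm. replace (sumR n (fun k => cnorm2 (vsub u u k))) with 0. apply sqrt_0.
 transitivity (sumR n (fun _ => 0)). clear; induction n; simpl; auto; rewrite <- IHn; ring.
 apply sumR_ext; intros; unfold vsub, csub, cnorm2; simpl; ring. Qed.

Lemma a0_sub n Lam P eps th v0 a t : is_solution n Lam P eps th v0 a ->
  vnorm n (vsub (a t) v0) = vnorm n (vsub (a t) (a 0)).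
Proof. intros [H _]. apply vnorm_ext; intros k Hk; unfold vsub; rewrite H; auto. Qed.

Lemma bootstrap_dir n Lam X P R0 eps v0 a sg :
  Lip_X n X P -> 0 < R0 -> 0 < X (2 * R0) -> vnorm n v0 <= R0 ->
  is_solution n Lam P eps (R0 / X (2 * R0)) v0 a -> Rabs sg = 1 ->
  forall t, 0 <= t <= R0 / X (2 * R0) -> vnorm n (vsub (a (sg * t)) v0) <= X (2 * R0) * t.
Proof.
 intros [_ [_ HL]] HR HX Hv0 Hsol Hsg.
 set (th := R0 / X (2 * R0)) in *. set (X2 := X (2 * R0)) in *.
 assert (Hth : 0 < th) by (unfold th; apply Rdiv_lt_0_compat; auto).
 assert (HXth : X2 * th = R0) by (unfold th; field; lra).
 assert (Hsgt : forall t, 0 <= t <= th -> - th <= sg * t <= th).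
 { intros t Ht. assert (Rabs (sg * t) <= th) by (rewrite Rabs_mult, Hsg, Rabs_pos_eq; lra). apply Rabs_le_between; auto. }
 assert (Hsg2 : sg = 1 \/ sg = -1) by (destruct (Rcase_abs sg); [rewrite Rabs_left in Hsg|rewrite Rabs_pos_eq in Hsg]; lra).
 assert (Hsgd : forall t t', Rabs (sg * t' - sg * t) = Rabs (t' - t)).
 { intros. replace (sg * t' - sg * t) with (sg * (t' - t)) by ring. rewrite Rabs_mult, Hsg; ring. }
 assert (Ybound : forall s, vnorm n (a s) < 2 * R0 -> vnorm n (yflow Lam P (s / eps) (a s)) <= X2).
 { intros s Hs. rewrite yflow_norm. apply (proj1 (HL (2 * R0) ltac:(lra))). rewrite vnorm_Phi; auto. }
 apply CI.
 - lra.
 - rewrite Rmult_0_r, (a0_sub _ _ _ _ _ _ _ _ Hsol). replace (sg * 0) with 0 by ring.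
   rewrite vnorm_sub_self; lra.
 - intros s Hs IH.
   assert (Hm : vnorm n (a (sg * s)) < 2 * R0).
   { eapply Rle_lt_trans. apply (vnorm_sub_le n (a (sg * s)) v0). pose proof (IH s ltac:(lra)).
     assert (X2 * s < X2 * th) by (apply Rmult_lt_compat_l; lra). lra. }
   destruct (vcont _ _ _ _ _ _ _ Hsol (sg * s) (Hsgt s ltac:(lra)) (2 * R0 - vnorm n (a (sg * s))) ltac:(lra)) as [d [Hd Hc]].
   exists d; split; auto. intros t Ht1 Ht2.
   rewrite (a0_sub _ _ _ _ _ _ _ _ Hsol).
   assert (Ht0 : 0 <= t) by lra.
   replace (X2 * t) with (X2 * Rabs (sg * t - 0)) by (rewrite Rminus_0_r, Rabs_mult, Hsg, Rabs_pos_eq; lra).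
   apply (vmvt _ _ _ _ _ _ _ _ Hsol). lra. split; lra. apply Hsgt; lra.
   intros s' Hs'. apply Ybound.
   assert (Hw : exists w, 0 <= w <= t /\ s' = sg * w).
   { destruct Hsg2 as [E|E]; subst sg; unfold Rmin, Rmax in Hs'; destruct Rle_dec in Hs'.
     exists s'; split; lra. exists s'; split; lra. exists (- s'); split; lra. exists (- s'); split; lra. }
   destruct Hw as [w [Hw Hw']]. subst s'.
   destruct (Rle_dec w s).
   + eapply Rle_lt_trans. apply (vnorm_sub_le n (a (sg * w)) v0). pose proof (IH w ltac:(lra)).
     assert (X2 * w < X2 * th) by (apply Rmult_lt_compat_l; lra). lra.
   + assert (Hcw : vnorm n (vsub (a (sg * w)) (a (sg * s))) < 2 * R0 - vnorm n (a (sg * s))).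
     { apply Hc. apply Hsgt; lra. rewrite Hsgd, Rabs_pos_eq; lra. }
     pose proof (vnorm_sub_le n (a (sg * w)) (a (sg * s))). lra.
 - intros s Hs IH. apply Rnot_lt_le; intros Hlt.
   set (g := vnorm n (vsub (a (sg * s)) v0) - X2 * s).
   destruct (vcont _ _ _ _ _ _ _ Hsol (sg * s) (Hsgt s ltac:(lra)) (g / 2) ltac:(unfold g; lra)) as [d [Hd Hc]].
   set (t := Rmax 0 (s - d / 2)).
   assert (Ht : 0 <= t < s /\ s - t < d) by (unfold t, Rmax; destruct Rle_dec; lra).
   specialize (IH t ltac:(lra)).
   specialize (Hc (sg * t) (Hsgt t ltac:(lra)) ltac:(rewrite Hsgd, Rabs_minus_sym, Rabs_pos_eq; lra)).
   rewrite vnorm_sub_sym in Hc.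
   pose proof (vnorm_triang_sub n (a (sg * s)) (a (sg * t)) v0).
   assert (X2 * t <= X2 * s) by (apply Rmult_le_compat_l; lra).
   unfold g in *. lra.
Qed.

Lemma confine n Lam X P R0 eps v0 a :
  Lip_X n X P -> 0 < R0 -> 0 < X (2 * R0) -> vnorm n v0 <= R0 ->
  is_solution n Lam P eps (R0 / X (2 * R0)) v0 a ->
  forall t, Rabs t <= R0 / X (2 * R0) -> vnorm n (a t) <= 2 * R0.
Proof.
 intros HL HR HX Hv Hs t Ht.
 assert (Hth : X (2 * R0) * (R0 / X (2 * R0)) = R0) by (field; lra).
 assert (E : exists sg, Rabs sg = 1 /\ t = sg * Rabs t).
 { destruct (Rcase_abs t). exists (-1); split. rewrite Rabs_left; lra. rewrite Rabs_left; lra.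
   exists 1; split. apply Rabs_R1. rewrite Rabs_pos_eq; lra. }
 destruct E as [sg [H1 H2]].
 assert (B := bootstrap_dir n Lam X P R0 eps v0 a sg HL HR HX Hv Hs H1 (Rabs t) ltac:(split; [apply Rabs_pos|auto])).
 rewrite <- H2 in B. pose proof (vnorm_sub_le n (a t) v0).
 assert (X (2 * R0) * Rabs t <= X (2 * R0) * (R0 / X (2 * R0))) by (apply Rmult_le_compat_l; lra). lra.
Qed.

Lemma alip n Lam X P R0 eps v0 a :
  nondecr_cont_nonneg X -> Lip_X n X P -> 0 < R0 -> 0 < X (2 * R0) -> vnorm n v0 <= R0 ->
  is_solution n Lam P eps (R0 / X (2 * R0)) v0 a ->
  forall x y, Rabs x <= R0 / X (2 * R0) -> Rabs y <= R0 / X (2 * R0) ->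
  vnorm n (vsub (a y) (a x)) <= X (2 * R0 + 1) * Rabs (y - x).
Proof.
 intros HXn HL HR HX Hv Hs x y Hx Hy.
 assert (HX1 : 0 <= X (2 * R0 + 1)) by (apply (proj1 HXn); lra).
 apply (vmvt _ _ _ _ _ _ _ _ Hs HX1). apply Rabs_le_between; auto. apply Rabs_le_between; auto.
 intros s Hs'. rewrite yflow_norm. assert (HL0 := HL). destruct HL0 as [_ [_ HL0]]. apply (proj1 (HL0 (2 * R0 + 1) ltac:(lra))).
 rewrite vnorm_Phi. assert (vnorm n (a s) <= 2 * R0); [|lra].
 apply (confine _ _ _ _ _ _ _ _ HL HR HX Hv Hs).
 apply Rabs_le_between in Hx; apply Rabs_le_between in Hy. apply Rabs_le.
 unfold Rmin, Rmax in Hs'; destruct Rle_dec in Hs'; lra.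
Qed.
Lemma RInt_bridge f lo hi : ex_RInt f lo hi -> Defs.RInt f lo hi = RInt f lo hi.
Proof.
 intros H. unfold Defs.RInt.
 assert (E : exists r, exists pr : Riemann_integrable f lo hi, RiemannInt pr = r).
 { exists (RiemannInt (ex_RInt_Reals_0 _ _ _ H)). exists (ex_RInt_Reals_0 _ _ _ H); auto. }
 destruct (epsilon_spec (inhabits 0) _ E) as [pr Hpr]. rewrite <- Hpr. symmetry; apply RInt_Reals.
Qed.

Definition clamp (lo hi t : R) := Rmax lo (Rmin hi t).
Lemma clamp_in lo hi t : lo <= hi -> lo <= clamp lo hi t <= hi.
Proof. intros; unfold clamp, Rmax, Rmin; repeat destruct Rle_dec; lra. Qed.
Lemma clamp_id lo hi t : lo <= t <= hi -> clamp lo hi t = t.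
Proof. intros; unfold clamp, Rmax, Rmin; repeat destruct Rle_dec; lra. Qed.
Lemma clamp_lip lo hi t t' : lo <= hi -> Rabs (clamp lo hi t' - clamp lo hi t) <= Rabs (t' - t).
Proof. intros; unfold clamp, Rmax, Rmin. assert (A1 := Rle_abs (t'-t)); assert (A2 := Rle_abs (-(t'-t))); rewrite Rabs_Ropp in A2.
  repeat destruct Rle_dec; apply Rabs_le; split; lra. Qed.

Lemma exRInt_cw f lo hi x y : cont_within f lo hi -> lo <= x <= hi -> lo <= y <= hi -> ex_RInt f x y.
Proof.
 intros Hc Hx Hy.
 apply (ex_RInt_ext (fun t => f (clamp lo hi t))).
 { intros z Hz. rewrite clamp_id; auto. unfold Rmin, Rmax in Hz; destruct Rle_dec in Hz; lra. }
 apply (@ex_RInt_continuous R_CompleteNormedModule). intros z _. apply continuity_pt_filterlim.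
 intros e He. destruct (Hc (clamp lo hi z) (clamp_in lo hi z ltac:(lra)) e He) as [d [Hd Hh]].
 exists d; split; auto. intros z' [_ Hz']. unfold R_dist in *. simpl in *. unfold R_dist in *.
 apply Hh. apply clamp_in; lra. eapply Rle_lt_trans. apply clamp_lip; lra. auto.
Qed.

Lemma RInt_abs_le (f : R -> R) a b M : ex_RInt f a b -> (forall t, Rmin a b <= t <= Rmax a b -> Rabs (f t) <= M) ->
  Rabs (RInt f a b) <= M * Rabs (b - a).
Proof.
 intros He HM. destruct (Rle_dec a b).
 - rewrite (Rabs_pos_eq (b - a)) by lra. rewrite Rmult_comm. apply abs_RInt_le_const; auto.
   intros t Ht; apply HM. rewrite Rmin_left, Rmax_right; lra.
 - rewrite <- (opp_RInt_swap f b a) by (apply ex_RInt_swap; auto). unfold opp; simpl. rewrite Rabs_Ropp.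
   rewrite (Rabs_left (b - a)) by lra. replace (- (b - a)) with (a - b) by ring. rewrite Rmult_comm.
   apply abs_RInt_le_const. lra. apply ex_RInt_swap; auto.
   intros t Ht; apply HM. rewrite Rmin_right, Rmax_left; lra.
Qed.

Lemma RInt_chasles (f : R -> R) a b c : ex_RInt f a b -> ex_RInt f b c -> RInt f a b + RInt f b c = RInt f a c.
Proof. intros; rewrite <- (RInt_Chasles f a b c) by auto; reflexivity. Qed.

Lemma RInt_sub (f g : R -> R) a b : ex_RInt f a b -> ex_RInt g a b ->
  RInt (fun x => f x - g x) a b = RInt f a b - RInt g a b.
Proof. intros. apply (RInt_minus f g a b); auto. Qed.

Lemma ex_RInt_sub (f g : R -> R) a b : ex_RInt f a b -> ex_RInt g a b -> ex_RInt (fun x => f x - g x) a b.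
Proof. intros. apply (ex_RInt_minus f g a b); auto. Qed.

Lemma RInt_cst c a b : @RInt R_CompleteNormedModule (fun _ => c) a b = (b - a) * c.
Proof. rewrite RInt_const. reflexivity. Qed.

Lemma RInt_shift (f : R -> R) a b tau : ex_RInt f (a + tau) (b + tau) ->
  RInt (fun t => f (t + tau)) a b = RInt f (a + tau) (b + tau).
Proof. intros H. assert (E := RInt_comp_lin f 1 tau a b).
 replace (1 * a + tau) with (a + tau) in E by ring. replace (1 * b + tau) with (b + tau) in E by ring.
 rewrite <- E by auto. apply RInt_ext; intros. unfold scal; simpl; unfold mult; simpl. f_equal. ring_simplify. f_equal. ring. Qed.

Lemma ex_RInt_shift (f : R -> R) a b tau : ex_RInt f (a + tau) (b + tau) -> ex_RInt (fun t => f (t + tau)) a b.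
Proof. intros H. assert (E := ex_RInt_comp_lin f 1 tau a b).
 replace (1 * a + tau) with (a + tau) in E by ring. replace (1 * b + tau) with (b + tau) in E by ring.
 specialize (E H). eapply ex_RInt_ext; [|exact E]. intros; unfold scal; simpl; unfold mult; simpl.
 ring_simplify. f_equal. ring. Qed.

Lemma RInt_scale (f : R -> R) a b eps : 0 < eps -> ex_RInt f (a / eps) (b / eps) ->
  RInt (fun s => f (s / eps)) a b = eps * RInt f (a / eps) (b / eps).
Proof. intros He H. assert (E := RInt_comp_lin f (/ eps) 0 a b).
 replace (/ eps * a + 0) with (a / eps) in E by (field; lra). replace (/ eps * b + 0) with (b / eps) in E by (field; lra).
 specialize (E H). rewrite <- E.
 assert (Ex : ex_RInt (fun y => scal (/ eps) (f (/ eps * y + 0))) a b).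
 { assert (E2 := ex_RInt_comp_lin f (/ eps) 0 a b).
   replace (/ eps * a + 0) with (a / eps) in E2 by (field; lra). replace (/ eps * b + 0) with (b / eps) in E2 by (field; lra). auto. }
 assert (E3 := RInt_scal (fun y => scal (/ eps) (f (/ eps * y + 0))) a b eps Ex).
 unfold scal in E3; simpl in E3; unfold mult in E3; simpl in E3.
 transitivity (RInt (fun y => eps * (/ eps * f (/ eps * y + 0))) a b).
 apply RInt_ext; intros. rewrite Rplus_0_r. replace (/ eps * x) with (x / eps) by (unfold Rdiv; ring). change (@eq R (f (x / eps)) (eps * (/ eps * f (x / eps)))). field. lra.
 unfold scal; simpl; unfold mult; simpl. rewrite E3. reflexivity.
Qed.
Definition AP (g : R -> R) (e0 L : R) : Prop :=
  forall x, exists tau, Rabs (tau - x) <= L /\ forall t, Rabs (g (t + tau) - g t) <= e0.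

Lemma nat_floor x : 0 <= x -> exists m : nat, INR m <= x < INR m + 1.
Proof. intros Hx. destruct (base_Int_part x) as [H1 H2].
 assert (Hz : (0 <= Int_part x)%Z). { 
   destruct (Z_lt_le_dec (Int_part x) 0) as [l|l]; auto. exfalso.
   assert (Hl : (Int_part x <= -1)%Z) by lia. apply IZR_le in Hl. lra. }
 exists (Z.to_nat (Int_part x)). rewrite INR_IZR_INZ, Z2Nat.id by auto. lra. Qed.

Lemma big_nat N x : exists j, (j >= N)%nat /\ x <= INR j + 1.
Proof. destruct (nat_floor (Rabs x) (Rabs_pos x)) as [m Hm]. exists (Nat.max N m). split. lia.
 assert (INR m <= INR (Nat.max N m)) by (apply le_INR; lia). pose proof (Rle_abs x). lra. Qed.

Lemma B1 (g : R -> R) M e0 L x T : (forall x y, ex_RInt g x y) -> (forall t, Rabs (g t) <= M) -> AP g e0 L -> 0 < T ->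
  Rabs (RInt g x (x + T) - RInt g 0 T) <= e0 * T + 2 * M * L.
Proof.
 intros Hi HM Hap HT. destruct (Hap x) as [tau [Htau Hg]].
 rewrite <- (RInt_chasles g x tau (x + T)) by auto.
 rewrite <- (RInt_chasles g tau (tau + T) (x + T)) by auto.
 assert (E : RInt g tau (tau + T) = RInt (fun t => g (t + tau)) 0 T).
 { rewrite RInt_shift. f_equal; ring. replace (0 + tau) with tau by ring. replace (T + tau) with (tau + T) by ring. auto. }
 rewrite E.
 assert (A1 : Rabs (RInt g x tau) <= M * Rabs (tau - x)) by (apply RInt_abs_le; auto).
 assert (A2 : Rabs (RInt g (tau + T) (x + T)) <= M * Rabs ((x + T) - (tau + T))) by (apply RInt_abs_le; auto).
 replace ((x + T) - (tau + T)) with (- (tau - x)) in A2 by ring. rewrite Rabs_Ropp in A2.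
 assert (A3 : Rabs (RInt (fun t => g (t + tau) - g t) 0 T) <= e0 * Rabs (T - 0)).
 { apply RInt_abs_le. apply ex_RInt_sub; auto. apply ex_RInt_shift; auto. intros; auto. }
 rewrite RInt_sub in A3 by (auto; apply ex_RInt_shift; auto).
 rewrite Rminus_0_r, (Rabs_pos_eq T) in A3 by lra.
 assert (M * Rabs (tau - x) <= M * L) by (apply Rmult_le_compat_l; auto; pose proof (HM 0); pose proof (Rabs_pos (g 0)); lra).
 set (a1 := RInt g x tau) in *. set (a2 := RInt g (tau + T) (x + T)) in *.
 set (a3 := RInt (fun t => g (t + tau)) 0 T) in *. set (a4 := RInt g 0 T) in *.
 apply Rabs_le_between in A1; apply Rabs_le_between in A2; apply Rabs_le_between in A3.
 apply Rabs_le. lra.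
Qed.

Lemma B2 (g : R -> R) M e0 L T : (forall x y, ex_RInt g x y) -> (forall t, Rabs (g t) <= M) -> AP g e0 L -> 0 < T ->
  forall m : nat, Rabs (RInt g 0 (INR m * T) - INR m * RInt g 0 T) <= INR m * (e0 * T + 2 * M * L).
Proof.
 intros Hi HM Hap HT m. induction m.
 - simpl. rewrite !Rmult_0_l. replace (RInt g 0 0) with 0 by (rewrite RInt_point; reflexivity). rewrite Rminus_0_r, Rabs_R0. lra.
 - rewrite S_INR. rewrite <- (RInt_chasles g 0 (INR m * T) ((INR m + 1) * T)) by auto.
   replace ((INR m + 1) * T) with (INR m * T + T) by ring.
   assert (H := B1 g M e0 L (INR m * T) T Hi HM Hap HT).
   set (A := RInt g 0 (INR m * T)) in *. set (B := RInt g (INR m * T) (INR m * T + T)) in *.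
   set (C := RInt g 0 T) in *.
   apply Rabs_le_between in H; apply Rabs_le_between in IHm. apply Rabs_le. lra.
Qed.

Lemma B3 (g : R -> R) M e0 L T S : (forall x y, ex_RInt g x y) -> (forall t, Rabs (g t) <= M) -> AP g e0 L -> 0 < T -> T <= S ->
  Rabs (RInt g 0 S / S - RInt g 0 T / T) <= e0 + 2 * M * L / T + 2 * M * T / S.
Proof.
 intros Hi HM Hap HT HS.
 assert (HM0 : 0 <= M) by (pose proof (HM 0); pose proof (Rabs_pos (g 0)); lra).
 destruct (nat_floor (S / T)) as [m [Hm1 Hm2]]. apply Rlt_le, Rdiv_lt_0_compat; lra.
 assert (Hm1' : INR m * T <= S) by (apply Rmult_le_compat_r with (r := T) in Hm1; [|lra]; replace (S / T * T) with S in Hm1 by (field; lra); lra).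
 assert (Hm2' : S < INR m * T + T) by (apply Rmult_lt_compat_r with (r := T) in Hm2; [|lra]; replace (S / T * T) with S in Hm2 by (field; lra); lra).
 assert (Hm0 : 0 <= INR m) by apply pos_INR.
 assert (H2 := B2 g M e0 L T Hi HM Hap HT m).
 rewrite <- (RInt_chasles g 0 (INR m * T) S) by auto.
 assert (H3 : Rabs (RInt g (INR m * T) S) <= M * Rabs (S - INR m * T)) by (apply RInt_abs_le; auto).
 rewrite (Rabs_pos_eq (S - INR m * T)) in H3 by lra.
 assert (H4 : Rabs (RInt g 0 T) <= M * Rabs (T - 0)) by (apply RInt_abs_le; auto).
 rewrite Rminus_0_r, (Rabs_pos_eq T) in H4 by lra.
 set (A := RInt g 0 (INR m * T)) in *. set (B := RInt g (INR m * T) S) in *. set (C := RInt g 0 T) in *.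
 assert (K : Rabs ((A + B) - (S / T) * C) <= (S / T) * (e0 * T + 2 * M * L) + 2 * M * T).
 { assert (Rabs ((S / T - INR m) * C) <= 1 * (M * T)).
   { rewrite Rabs_mult. apply Rmult_le_compat. apply Rabs_pos. apply Rabs_pos.
     rewrite Rabs_pos_eq; lra. auto. }
   assert (INR m * (e0 * T + 2 * M * L) <= (S / T) * (e0 * T + 2 * M * L)).
   { apply Rmult_le_compat_r; auto. assert (0 <= e0).
     { destruct (Hap 0) as [tau [_ Ht]]. pose proof (Ht 0). pose proof (Rabs_pos (g (0 + tau) - g 0)). lra. }
     assert (0 <= L). { destruct (Hap 0) as [tau [Ht _]]. pose proof (Rabs_pos (tau - 0)). lra. }
     pose proof (Rmult_le_pos _ _ H0 (Rlt_le _ _ HT)). pose proof (Rmult_le_pos _ _ HM0 H1). nra. }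
   apply Rabs_le_between in H; apply Rabs_le_between in H2; apply Rabs_le_between in H3.
   assert ((S / T - INR m) * C = S / T * C - INR m * C) by ring.
   apply Rabs_le. nra. }
 replace ((A + B) / S - C / T) with (((A + B) - (S / T) * C) / S) by (field; lra).
 unfold Rdiv at 1. rewrite Rabs_mult, Rabs_inv, (Rabs_pos_eq S) by lra.
 apply Rmult_le_reg_r with S. lra. rewrite Rmult_assoc, Rinv_l, Rmult_1_r by lra.
 replace ((e0 + 2 * M * L / T + 2 * M * T / S) * S) with (S / T * (e0 * T + 2 * M * L) + 2 * M * T) by (field; lra).
 auto.
Qed.
Definition useq (g : R -> R) (j : nat) : R := RInt g 0 (INR j + 1) / (INR j + 1).

Lemma lim_rate (g : R -> R) M e0 L c T : (forall x y, ex_RInt g x y) -> (forall t, Rabs (g t) <= M) -> AP g e0 L ->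
  Un_cv (useq g) c -> 0 < T -> Rabs (RInt g 0 T / T - c) <= e0 + 2 * M * L / T.
Proof.
 intros Hi HM Hap Hc HT. apply le_epsilon. intros eta Heta.
 assert (HM0 : 0 <= M) by (pose proof (HM 0); pose proof (Rabs_pos (g 0)); lra).
 destruct (Hc (eta / 2) ltac:(lra)) as [N HN].
 destruct (big_nat N (T + 4 * M * T / eta)) as [j [Hj1 Hj2]].
 assert (Hq : 0 <= 4 * M * T / eta) by (apply Rmult_le_pos; [nra| apply Rlt_le, Rinv_0_lt_compat; lra]).
 specialize (HN j Hj1). unfold R_dist in HN.
 assert (H3 := B3 g M e0 L T (INR j + 1) Hi HM Hap HT ltac:(lra)).
 assert (2 * M * T / (INR j + 1) <= eta / 2).
 { apply Rmult_le_reg_r with (INR j + 1). pose proof (pos_INR j); lra.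
   replace (2 * M * T / (INR j + 1) * (INR j + 1)) with (2 * M * T) by (field; pose proof (pos_INR j); lra).
   assert (4 * M * T / eta * eta = 4 * M * T) by (field; lra).
   assert (4 * M * T / eta <= INR j + 1) by lra.
   assert (4 * M * T <= (INR j + 1) * eta) by (rewrite <- H; apply Rmult_le_compat_r; lra). lra. }
 unfold useq in HN. rewrite Rabs_minus_sym in H3.
 set (u := RInt g 0 (INR j + 1) / (INR j + 1)) in *. set (m := RInt g 0 T / T) in *.
 apply Rabs_le_between in H3; apply Rabs_lt_between in HN. apply Rabs_le. lra.
Qed.

Lemma avg_rate (g : R -> R) M e0 L c : (forall x y, ex_RInt g x y) -> (forall t, Rabs (g t) <= M) -> AP g e0 L ->
  Un_cv (useq g) c -> forall x T, 0 < T -> Rabs (RInt g x (x + T) / T - c) <= 2 * e0 + 4 * M * L / T.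
Proof.
 intros Hi HM Hap Hc x T HT.
 assert (H1 := lim_rate g M e0 L c T Hi HM Hap Hc HT).
 assert (H2 := B1 g M e0 L x T Hi HM Hap HT).
 assert (H3 : Rabs (RInt g x (x + T) / T - RInt g 0 T / T) <= e0 + 2 * M * L / T).
 { replace (RInt g x (x + T) / T - RInt g 0 T / T) with ((RInt g x (x + T) - RInt g 0 T) / T) by (field; lra).
   unfold Rdiv. rewrite Rabs_mult, Rabs_inv, (Rabs_pos_eq T) by lra.
   apply Rmult_le_reg_r with T; auto. rewrite Rmult_assoc, Rinv_l, Rmult_1_r by lra.
   replace ((e0 + 2 * M * L * / T) * T) with (e0 * T + 2 * M * L) by (field; lra). auto. }
 set (a := RInt g x (x + T) / T) in *. set (b := RInt g 0 T / T) in *.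
 replace (4 * M * L / T) with (2 * M * L / T + 2 * M * L / T) by (field; lra).
 apply Rabs_le_between in H1; apply Rabs_le_between in H3. apply Rabs_le. unfold Rdiv in *. lra.
Qed.

Lemma avg_exists (g : R -> R) M : (forall x y, ex_RInt g x y) -> (forall t, Rabs (g t) <= M) ->
  (forall e0, 0 < e0 -> exists L, AP g e0 L) ->
  exists c, Un_cv (useq g) c /\
    forall eta, 0 < eta -> exists T1, 0 < T1 /\ forall S, T1 < Rabs S -> Rabs (RInt g 0 S / S - c) < eta.
Proof.
 intros Hi HM Hap.
 assert (HM0 : 0 <= M) by (pose proof (HM 0); pose proof (Rabs_pos (g 0)); lra).
 assert (HL0 : forall e0 L, AP g e0 L -> 0 <= L).
 { intros e0 L H. destruct (H 0) as [tau [Ht _]]. pose proof (Rabs_pos (tau - 0)). lra. }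
 assert (Cau : Cauchy_crit (useq g)).
 { intros eta Heta. destruct (Hap (eta / 8) ltac:(lra)) as [L HL]. pose proof (HL0 _ _ HL).
   set (T := 1 + 16 * M * L / eta).
   assert (HTq : 0 <= 16 * M * L / eta) by (apply Rmult_le_pos; [nra| apply Rlt_le, Rinv_0_lt_compat; lra]).
   assert (HT : 0 < T) by (unfold T; lra).
   assert (K1 : 2 * M * L / T <= eta / 8).
   { apply Rmult_le_reg_r with T; auto. replace (2 * M * L / T * T) with (2 * M * L) by (field; lra).
     unfold T. replace (eta / 8 * (1 + 16 * M * L / eta)) with (eta / 8 + 2 * M * L) by (field; lra). lra. }
   destruct (big_nat 0 (T + 16 * M * T / eta)) as [N [_ HN]].
   assert (Hq : 0 <= 16 * M * T / eta) by (apply Rmult_le_pos; [nra| apply Rlt_le, Rinv_0_lt_compat; lra]).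
   assert (Kj : forall j, (j >= N)%nat -> Rabs (useq g j - RInt g 0 T / T) <= 3 * eta / 8).
   { intros j Hj. assert (INR N <= INR j) by (apply le_INR; lia).
     assert (H3 := B3 g M (eta / 8) L T (INR j + 1) Hi HM HL HT ltac:(lra)).
     assert (2 * M * T / (INR j + 1) <= eta / 8).
     { apply Rmult_le_reg_r with (INR j + 1). pose proof (pos_INR j); lra.
       replace (2 * M * T / (INR j + 1) * (INR j + 1)) with (2 * M * T) by (field; pose proof (pos_INR j); lra).
       assert (E : 16 * M * T / eta * eta = 16 * M * T) by (field; lra).
       assert (16 * M * T / eta <= INR j + 1) by lra.
       assert (16 * M * T <= (INR j + 1) * eta) by (rewrite <- E; apply Rmult_le_compat_r; lra). lra. }
     unfold useq. apply Rabs_le_between in H3. apply Rabs_le. lra. }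
   exists N. intros j j' Hj Hj'. unfold R_dist.
   pose proof (Kj j Hj). pose proof (Kj j' Hj').
   set (m := RInt g 0 T / T) in *.
   apply Rabs_le_between in H0; apply Rabs_le_between in H1. apply Rabs_lt_between. lra. }
 destruct (Rcomplete.R_complete _ Cau) as [c Hc]. exists c. split; auto.
 intros eta Heta. destruct (Hap (eta / 8) ltac:(lra)) as [L HL]. pose proof (HL0 _ _ HL).
 set (T1 := 1 + 16 * M * L / eta).
 assert (HTq : 0 <= 16 * M * L / eta) by (apply Rmult_le_pos; [nra| apply Rlt_le, Rinv_0_lt_compat; lra]).
 exists T1. split. unfold T1; lra. intros S HS.
 assert (Kr : forall T, T1 < T -> 2 * M * L / T < eta / 8).
 { intros T HT. apply Rmult_lt_reg_r with T. unfold T1 in HT; lra. replace (2 * M * L / T * T) with (2 * M * L) by (field; unfold T1 in HT; lra).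
   apply Rle_lt_trans with (eta / 8 * T1). unfold T1. replace (eta / 8 * (1 + 16 * M * L / eta)) with (eta / 8 + 2 * M * L) by (field; lra). lra.
   apply Rmult_lt_compat_l; lra. }
 destruct (Rcase_abs S) as [Hn|Hp].
 - rewrite Rabs_left in HS by lra. set (T := - S).
   assert (HT : 0 < T) by (unfold T; lra).
   assert (E : RInt g 0 S / S = RInt g S (S + T) / T).
   { replace (S + T) with 0 by (unfold T; ring). rewrite <- (opp_RInt_swap g S 0) by auto. unfold opp; simpl.
     unfold T; field; lra. }
   rewrite E.
   assert (H1 := avg_rate g M (eta / 8) L c Hi HM HL Hc S T HT).
   assert (2 * M * L / T < eta / 8) by (apply Kr; unfold T; lra).
   replace (4 * M * L / T) with (2 * (2 * M * L / T)) in H1 by (field; lra). lra.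
 - rewrite Rabs_pos_eq in HS by lra.
   assert (H1 := lim_rate g M (eta / 8) L c S Hi HM HL Hc ltac:(unfold T1 in HS; lra)).
   assert (2 * M * L / S < eta / 8) by (apply Kr; lra). lra.
Qed.
Lemma Rabs_sin_pos y : 0 < y -> Rabs (sin y) <= y.
Proof. intros Hy. pose proof (SIN_bound y). destruct (Rle_dec 1 y). apply Rabs_le; lra.
 pose proof PI2_1. pose proof PI2_Rlt_PI. assert (0 < sin y) by (apply sin_gt_0; lra).
 pose proof (sin_lt_x y Hy). rewrite Rabs_pos_eq; lra. Qed.
Lemma Rabs_sin_le x : Rabs (sin x) <= Rabs x.
Proof. destruct (Rtotal_order x 0) as [H|[H|H]].
 - rewrite (Rabs_left x) by lra. replace x with (- (- x)) at 1 by ring. rewrite sin_neg, Rabs_Ropp.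
   apply Rabs_sin_pos; lra.
 - subst; rewrite sin_0, Rabs_R0; lra.
 - rewrite (Rabs_pos_eq x) by lra. apply Rabs_sin_pos; lra. Qed.

Lemma cos_lip x y : Rabs (cos x - cos y) <= Rabs (x - y).
Proof. rewrite form2. rewrite !Rabs_mult. pose proof (Rabs_sin_le ((x - y) / 2)).
 pose proof (SIN_bound ((x + y) / 2)). assert (Rabs (sin ((x + y) / 2)) <= 1) by (apply Rabs_le; lra).
 replace (Rabs (-2)) with 2 by (rewrite Rabs_left; lra).
 replace (Rabs ((x - y) / 2)) with (Rabs (x - y) / 2) in H by (unfold Rdiv; rewrite Rabs_mult, Rabs_inv, (Rabs_pos_eq 2) by lra; auto).
 pose proof (Rabs_pos (sin ((x - y) / 2))). pose proof (Rabs_pos (sin ((x + y) / 2))). nra. Qed.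

Lemma sin_lip x y : Rabs (sin x - sin y) <= Rabs (x - y).
Proof. rewrite form4. rewrite !Rabs_mult. pose proof (Rabs_sin_le ((x - y) / 2)).
 pose proof (COS_bound ((x + y) / 2)). assert (Rabs (cos ((x + y) / 2)) <= 1) by (apply Rabs_le; lra).
 replace (Rabs 2) with 2 by (rewrite Rabs_pos_eq; lra).
 replace (Rabs ((x - y) / 2)) with (Rabs (x - y) / 2) in H by (unfold Rdiv; rewrite Rabs_mult, Rabs_inv, (Rabs_pos_eq 2) by lra; auto).
 pose proof (Rabs_pos (sin ((x - y) / 2))). pose proof (Rabs_pos (cos ((x + y) / 2))). nra. Qed.

Lemma Phi_diff n w w' u D : 0 <= D ->
  (forall j, (j < n)%nat -> Rabs (cos (w j) - cos (w' j)) <= D /\ Rabs (sin (w j) - sin (w' j)) <= D) ->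
  vnorm n (vsub (Phi w u) (Phi w' u)) <= 2 * D * vnorm n u.
Proof.
 intros HD H. apply sqrt_le_of. pose proof (vnorm_nonneg n u); nra.
 replace (2 * D * vnorm n u * (2 * D * vnorm n u)) with ((4 * (D * D)) * (vnorm n u * vnorm n u)) by ring.
 rewrite vnorm_sqr. unfold sqv. rewrite <- sumR_scal. apply sumR_le. intros j Hj.
 destruct (H j Hj) as [H1 H2]. unfold vsub, Phi, csub, cmul, cnorm2, expi; simpl.
 set (c := cos (w j) - cos (w' j)) in *. set (s := sin (w j) - sin (w' j)) in *.
 set (u1 := fst (u j)). set (u2 := snd (u j)).
 replace ((cos (w j) * u1 - sin (w j) * u2 - (cos (w' j) * u1 - sin (w' j) * u2)) *
    (cos (w j) * u1 - sin (w j) * u2 - (cos (w' j) * u1 - sin (w' j) * u2)) +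
    (cos (w j) * u2 + sin (w j) * u1 - (cos (w' j) * u2 + sin (w' j) * u1)) *
    (cos (w j) * u2 + sin (w j) * u1 - (cos (w' j) * u2 + sin (w' j) * u1)))
   with ((c * c + s * s) * (u1 * u1 + u2 * u2)) by (unfold c, s; ring).
 assert (c * c <= D * D) by (apply Rabs_le_between in H1; nra).
 assert (s * s <= D * D) by (apply Rabs_le_between in H2; nra).
 assert (0 <= u1 * u1 + u2 * u2) by nra. nra.
Qed.

Lemma Pbound n X P r v : Lip_X n X P -> 0 <= r -> vnorm n v < r -> vnorm n (P v) <= X r.
Proof. intros [_ [_ H]] Hr Hv. apply (proj1 (H r Hr)); auto. Qed.
Lemma Plip n X P r u v : Lip_X n X P -> 0 <= r -> vnorm n u < r -> vnorm n v < r ->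
  vnorm n (vsub (P u) (P v)) <= X r * vnorm n (vsub u v).
Proof. intros [_ [_ H]] Hr Hu Hv. apply (proj2 (H r Hr)); auto. Qed.

Lemma ydiff n Lam X P r t t' a b k D :
  Lip_X n X P -> 0 <= r -> vnorm n a < r -> vnorm n b < r -> (k < n)%nat -> 0 <= D ->
  (forall j, (j < n)%nat -> Rabs (cos (Lam j * t) - cos (Lam j * t')) <= D /\
                          Rabs (sin (Lam j * t) - sin (Lam j * t')) <= D) ->
  Rabs (fst (yflow Lam P t a k) - fst (yflow Lam P t' b k)) <= 2 * D * X r + 2 * X r * (vnorm n (vsub a b) + 2 * D * r) /\
  Rabs (snd (yflow Lam P t a k) - snd (yflow Lam P t' b k)) <= 2 * D * X r + 2 * X r * (vnorm n (vsub a b) + 2 * D * r).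
Proof.
 intros HL Hr Ha Hb Hk HD Hcs.
 set (w := fun j => - (Lam j * t)). set (w' := fun j => - (Lam j * t')).
 set (u := Phi w a). set (u' := Phi w' b).
 assert (Hu : vnorm n u < r) by (unfold u; rewrite vnorm_Phi; auto).
 assert (Hu' : vnorm n u' < r) by (unfold u'; rewrite vnorm_Phi; auto).
 assert (HXr : 0 <= X r). { pose proof (Pbound n X P r u HL Hr Hu). pose proof (vnorm_nonneg n (P u)). lra. }
 assert (V : vnorm n (vsub u u') <= vnorm n (vsub a b) + 2 * D * r).
 { eapply Rle_trans. apply (vnorm_triang_sub n u (Phi w b) u').
   unfold u. rewrite vnorm_Phi_sub. unfold u'.
   assert (vnorm n (vsub (Phi w b) (Phi w' b)) <= 2 * D * vnorm n b).
   { apply Phi_diff; auto. intros j Hj. destruct (Hcs j Hj). unfold w, w'. rewrite !cos_neg, !sin_neg.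
     split; auto. replace (- sin (Lam j * t) - - sin (Lam j * t')) with (- (sin (Lam j * t) - sin (Lam j * t'))) by ring.
     rewrite Rabs_Ropp; auto. }
   assert (2 * D * vnorm n b <= 2 * D * r) by (apply Rmult_le_compat_l; lra). lra. }
 assert (PV : vnorm n (vsub (P u) (P u')) <= X r * (vnorm n (vsub a b) + 2 * D * r)).
 { eapply Rle_trans. apply (Plip n X P r u u' HL Hr Hu Hu'). apply Rmult_le_compat_l; auto. }
 assert (Hp1 := comp_le_fst n (P u) k Hk). assert (Hp2 := comp_le_snd n (P u) k Hk).
 assert (Hd1 : Rabs (fst (P u k) - fst (P u' k)) <= vnorm n (vsub (P u) (P u'))) by exact (comp_le_fst n (vsub (P u) (P u')) k Hk).
 assert (Hd2 : Rabs (snd (P u k) - snd (P u' k)) <= vnorm n (vsub (P u) (P u'))) by exact (comp_le_snd n (vsub (P u) (P u')) k Hk).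
 assert (PB := Pbound n X P r u HL Hr Hu).
 destruct (Hcs k Hk) as [C1 C2].
 unfold yflow, Phi at 1 3; fold w w' u u'. unfold cmul, expi; simpl.
 set (A := Lam k * t) in *. set (A' := Lam k * t') in *.
 set (p1 := fst (P u k)) in *. set (p2 := snd (P u k)) in *.
 set (q1 := fst (P u' k)) in *. set (q2 := snd (P u' k)) in *.
 pose proof (COS_bound A'). pose proof (SIN_bound A').
 assert (E1 : Rabs ((cos A - cos A') * p1) <= D * X r).
 { rewrite Rabs_mult. apply Rmult_le_compat; auto using Rabs_pos. lra. }
 assert (E2 : Rabs ((sin A - sin A') * p2) <= D * X r).
 { rewrite Rabs_mult. apply Rmult_le_compat; auto using Rabs_pos. lra. }
 assert (E3 : Rabs ((sin A - sin A') * p1) <= D * X r).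
 { rewrite Rabs_mult. apply Rmult_le_compat; auto using Rabs_pos. lra. }
 assert (E4 : Rabs ((cos A - cos A') * p2) <= D * X r).
 { rewrite Rabs_mult. apply Rmult_le_compat; auto using Rabs_pos. lra. }
 assert (F1 : Rabs (cos A' * (p1 - q1)) <= Rabs (p1 - q1)).
 { rewrite Rabs_mult. assert (Rabs (cos A') <= 1) by (apply Rabs_le; lra).
   pose proof (Rabs_pos (p1 - q1)). pose proof (Rabs_pos (cos A')). nra. }
 assert (F2 : Rabs (sin A' * (p2 - q2)) <= Rabs (p2 - q2)).
 { rewrite Rabs_mult. assert (Rabs (sin A') <= 1) by (apply Rabs_le; lra).
   pose proof (Rabs_pos (p2 - q2)). pose proof (Rabs_pos (sin A')). nra. }
 assert (F3 : Rabs (cos A' * (p2 - q2)) <= Rabs (p2 - q2)).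
 { rewrite Rabs_mult. assert (Rabs (cos A') <= 1) by (apply Rabs_le; lra).
   pose proof (Rabs_pos (p2 - q2)). pose proof (Rabs_pos (cos A')). nra. }
 assert (F4 : Rabs (sin A' * (p1 - q1)) <= Rabs (p1 - q1)).
 { rewrite Rabs_mult. assert (Rabs (sin A') <= 1) by (apply Rabs_le; lra).
   pose proof (Rabs_pos (p1 - q1)). pose proof (Rabs_pos (sin A')). nra. }
 split.
 - replace (cos A * p1 - sin A * p2 - (cos A' * q1 - sin A' * q2)) with
     ((cos A - cos A') * p1 - (sin A - sin A') * p2 + (cos A' * (p1 - q1) - sin A' * (p2 - q2))) by ring.
   apply Rabs_le_between in E1; apply Rabs_le_between in E2; apply Rabs_le_between in F1; apply Rabs_le_between in F2.
   apply Rabs_le. lra.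
 - replace (cos A * p2 + sin A * p1 - (cos A' * q2 + sin A' * q1)) with
     ((cos A - cos A') * p2 + (sin A - sin A') * p1 + (cos A' * (p2 - q2) + sin A' * (p1 - q1))) by ring.
   apply Rabs_le_between in E3; apply Rabs_le_between in E4; apply Rabs_le_between in F3; apply Rabs_le_between in F4.
   apply Rabs_le. lra.
Qed.
Lemma FIN (V : Type) (F : R -> V) (L : list V) :
  exists T0, 0 <= T0 /\ forall x, In (F x) L -> exists t, Rabs t <= T0 /\ F t = F x.
Proof.
 induction L as [|v L IH]. exists 0; split; [lra|]. intros x [].
 destruct IH as [T0 [HT0 IH]].
 destruct (classic (exists t, F t = v)) as [[t0 Ht0]|Hn].
 - exists (Rmax T0 (Rabs t0)). split. eapply Rle_trans; [exact HT0|apply Rmax_l].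
   intros x [Hx|Hx]. exists t0; split. apply Rmax_r. congruence.
   destruct (IH x Hx) as [t [Ht1 Ht2]]. exists t; split; auto. eapply Rle_trans; [exact Ht1|apply Rmax_l].
 - exists T0; split; auto. intros x [Hx|Hx]. exfalso; apply Hn; exists x; auto. auto.
Qed.

Fixpoint allL (m Nb : nat) : list (list (nat * nat)) :=
  match m with
  | O => nil :: nil
  | S m' => flat_map (fun p => map (cons p) (allL m' Nb)) (list_prod (seq 0 (S Nb)) (seq 0 (S Nb)))
  end.

Lemma allL_in Nb : forall l : list (nat * nat), (forall p, In p l -> (fst p <= Nb)%nat /\ (snd p <= Nb)%nat) ->
  In l (allL (length l) Nb).
Proof.
 induction l as [|p l IH]; intros H. simpl; auto.
 change (In (p :: l) (flat_map (fun p => map (cons p) (allL (length l) Nb)) (list_prod (seq 0 (S Nb)) (seq 0 (S Nb))))).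
 apply in_flat_map. exists p. split.
 - destruct p as [p1 p2]. destruct (H (p1, p2) (or_introl eq_refl)) as [A B]; simpl in A, B.
   apply in_prod; apply in_seq; lia.
 - apply in_map. apply IH. intros q Hq; apply H; right; auto.
Qed.

Lemma nth_map_seq {A : Type} (f : nat -> A) n j d : (j < n)%nat -> nth j (map f (seq 0 n)) d = f j.
Proof. intros H. rewrite nth_indep with (d' := f 0%nat). rewrite map_nth, seq_nth by auto. auto.
 rewrite length_map, length_seq; auto. Qed.

Definition idxz (z : R) : nat := Z.to_nat (Int_part z).
Lemma idxz_spec z : 0 <= z -> INR (idxz z) <= z < INR (idxz z) + 1.
Proof. intros Hx. unfold idxz. destruct (base_Int_part z) as [H1 H2].
 assert (Hz : (0 <= Int_part z)%Z). {
   destruct (Z_lt_le_dec (Int_part z) 0) as [l|l]; auto. exfalso.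
   assert (Hl : (Int_part z <= -1)%Z) by lia. apply IZR_le in Hl. lra. }
 rewrite INR_IZR_INZ, Z2Nat.id by auto. lra. Qed.

Lemma density n (Lam : nat -> R) dl : 0 < dl -> exists L, 0 <= L /\ forall x, exists tau, Rabs (tau - x) <= L /\
  forall j, (j < n)%nat -> Rabs (cos (Lam j * tau) - 1) <= dl /\ Rabs (sin (Lam j * tau)) <= dl.
Proof.
 intros Hdl. set (h := dl / 2). assert (Hh : 0 < h) by (unfold h; lra).
 set (cl := fun y => idxz ((y + 1) / h)).
 set (cellv := fun t => map (fun j => (cl (cos (Lam j * t)), cl (sin (Lam j * t)))) (seq 0 n)).
 destruct (nat_floor (2 / h)) as [Nb [HN1 HN2]]. apply Rlt_le, Rdiv_lt_0_compat; lra.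
 assert (Hcl : forall y, -1 <= y <= 1 -> (cl y <= Nb)%nat /\ INR (cl y) <= (y + 1) / h < INR (cl y) + 1).
 { intros y Hy. assert (Hq : 0 <= (y + 1) / h) by (apply Rmult_le_pos; [lra|apply Rlt_le, Rinv_0_lt_compat; lra]).
   destruct (idxz_spec _ Hq) as [A B]. split; [|unfold cl; lra].
   assert ((y + 1) / h <= 2 / h) by (unfold Rdiv; apply Rmult_le_compat_r; [apply Rlt_le, Rinv_0_lt_compat|]; lra).
   assert (INR (cl y) < INR Nb + 1) by (unfold cl; lra).
   rewrite <- S_INR in H0. apply INR_lt in H0. lia. }
 assert (Hsame : forall y y', -1 <= y <= 1 -> -1 <= y' <= 1 -> cl y = cl y' -> Rabs (y - y') < h).
 { intros y y' Hy Hy' E. destruct (Hcl y Hy) as [_ [A1 A2]]. destruct (Hcl y' Hy') as [_ [B1 B2]].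
   rewrite E in A1, A2. assert (Rabs ((y + 1) / h - (y' + 1) / h) < 1) by (apply Rabs_def1; lra).
   replace ((y + 1) / h - (y' + 1) / h) with ((y - y') / h) in H by (field; lra).
   unfold Rdiv in H. rewrite Rabs_mult, Rabs_inv, (Rabs_pos_eq h) in H by lra.
   apply Rmult_lt_reg_r with (/ h). apply Rinv_0_lt_compat; lra. rewrite Rinv_r by lra. auto. }
 destruct (FIN _ cellv (allL n Nb)) as [T0 [HT0 HF]].
 exists T0. split; auto. intros x.
 destruct (HF (- x)) as [t [Ht Et]].
 { assert (Hlen : length (cellv (- x)) = n) by (unfold cellv; rewrite length_map, length_seq; auto).
   pose proof (allL_in Nb (cellv (- x))) as K. rewrite Hlen in K. apply K. intros p Hp. unfold cellv in Hp. apply in_map_iff in Hp. destruct Hp as [j [Ej _]]. subst p; simpl.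
   split; apply Hcl; [apply COS_bound|apply SIN_bound]. }
 exists (t + x). split. replace (t + x - x) with t by ring; auto.
 intros j Hj.
 assert (E : cl (cos (Lam j * t)) = cl (cos (Lam j * - x)) /\ cl (sin (Lam j * t)) = cl (sin (Lam j * - x))).
 { assert (K := f_equal (fun l => nth j l (0%nat, 0%nat)) Et). simpl in K. unfold cellv in K.
   assert (M1 : forall s, nth j (map (fun j0 => (cl (cos (Lam j0 * s)), cl (sin (Lam j0 * s)))) (seq 0 n)) (0%nat, 0%nat) = (cl (cos (Lam j * s)), cl (sin (Lam j * s)))).
   { intros s. apply (nth_map_seq (fun j0 => (cl (cos (Lam j0 * s)), cl (sin (Lam j0 * s))))); auto. }
   rewrite !M1 in K. inversion K; auto. }
 destruct E as [E1 E2].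
 apply Hsame in E1; [|apply COS_bound|apply COS_bound]. apply Hsame in E2; [|apply SIN_bound|apply SIN_bound].
 replace (Lam j * - x) with (- (Lam j * x)) in E1, E2 by ring. rewrite cos_neg in E1. rewrite sin_neg in E2.
 replace (Lam j * (t + x)) with (Lam j * t + Lam j * x) by ring.
 rewrite cos_plus, sin_plus.
 set (A := Lam j * t) in *. set (B := Lam j * x) in *.
 pose proof (sin2_cos2 B). unfold Rsqr in H. pose proof (COS_bound B). pose proof (SIN_bound B).
 apply Rabs_lt_between in E1; apply Rabs_lt_between in E2.
 replace (cos A * cos B - sin A * sin B - 1) with ((cos A - cos B) * cos B - (sin A + sin B) * sin B) by nra.
 replace (sin A * cos B + cos A * sin B) with ((sin A + sin B) * cos B + (cos A - cos B) * sin B) by ring.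
 unfold h in *. split; apply Rabs_le; split; nra.
Qed.
Definition gre (Lam : nat -> R) (P : vec -> vec) (a : vec) (k : nat) : R -> R := fun t => fst (yflow Lam P t a k).
Definition gim (Lam : nat -> R) (P : vec -> vec) (a : vec) (k : nat) : R -> R := fun t => snd (yflow Lam P t a k).
Definition Lm (n : nat) (Lam : nat -> R) : R := sumR n (fun j => Rabs (Lam j)).

Lemma Lm_nonneg n Lam : 0 <= Lm n Lam.
Proof. apply sumR_nonneg; intros; apply Rabs_pos. Qed.

Lemma lip_cw f C lo hi : 0 <= C -> (forall t t', lo <= t <= hi -> lo <= t' <= hi -> Rabs (f t' - f t) <= C * Rabs (t' - t)) ->
  cont_within f lo hi.
Proof. intros HC H t Ht e He. exists (e / (C + 1)). split. apply Rdiv_lt_0_compat; lra.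
 intros t' Ht' Hd. eapply Rle_lt_trans. apply H; auto.
 apply Rle_lt_trans with ((C + 1) * Rabs (t' - t)). apply Rmult_le_compat_r. apply Rabs_pos. lra.
 apply Rmult_lt_reg_r with (/ (C + 1)). apply Rinv_0_lt_compat; lra.
 replace ((C + 1) * Rabs (t' - t) * / (C + 1)) with (Rabs (t' - t)) by (field; lra). unfold Rdiv in Hd. lra. Qed.

Lemma exRInt_lip f C x y : 0 <= C -> (forall t t', Rabs (f t' - f t) <= C * Rabs (t' - t)) -> ex_RInt f x y.
Proof. intros HC H. apply (exRInt_cw f (Rmin x y) (Rmax x y)).
 apply (lip_cw f C); auto. split; [apply Rmin_l|apply Rmax_l]. split; [apply Rmin_r|apply Rmax_r]. Qed.

Lemma g_bound n Lam X P r a k t : Lip_X n X P -> 0 <= r -> vnorm n a < r -> (k < n)%nat ->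
  Rabs (gre Lam P a k t) <= X r /\ Rabs (gim Lam P a k t) <= X r.
Proof. intros HL Hr Ha Hk. unfold gre, gim.
 assert (vnorm n (yflow Lam P t a) <= X r) by (rewrite yflow_norm; apply (Pbound n X P r); auto; rewrite vnorm_Phi; auto).
 split; eapply Rle_trans; try apply comp_le_fst; try apply comp_le_snd; eauto. Qed.

Lemma cs_lip_hyp n Lam t t' : forall j, (j < n)%nat ->
  Rabs (cos (Lam j * t) - cos (Lam j * t')) <= Lm n Lam * Rabs (t - t') /\
  Rabs (sin (Lam j * t) - sin (Lam j * t')) <= Lm n Lam * Rabs (t - t').
Proof. intros j Hj.
 assert (Rabs (Lam j) <= Lm n Lam) by (apply (sumR_term_le n (fun j => Rabs (Lam j))); auto; intros; apply Rabs_pos).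
 assert (E : Rabs (Lam j * t - Lam j * t') <= Lm n Lam * Rabs (t - t')).
 { replace (Lam j * t - Lam j * t') with (Lam j * (t - t')) by ring. rewrite Rabs_mult.
   apply Rmult_le_compat_r; auto; apply Rabs_pos. }
 split; eapply Rle_trans; try apply cos_lip; try apply sin_lip; eauto. Qed.

Definition Cy (n : nat) (Lam : nat -> R) (X : R -> R) (r : R) : R := 2 * Lm n Lam * X r + 4 * X r * Lm n Lam * r.

Lemma y_lip n Lam X P r a b t t' k : Lip_X n X P -> 0 <= r -> vnorm n a < r -> vnorm n b < r -> (k < n)%nat ->
  Rabs (fst (yflow Lam P t a k) - fst (yflow Lam P t' b k)) <= Cy n Lam X r * Rabs (t - t') + 2 * X r * vnorm n (vsub a b) /\
  Rabs (snd (yflow Lam P t a k) - snd (yflow Lam P t' b k)) <= Cy n Lam X r * Rabs (t - t') + 2 * X r * vnorm n (vsub a b).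
Proof. intros HL Hr Ha Hb Hk.
 assert (D0 : 0 <= Lm n Lam * Rabs (t - t')) by (apply Rmult_le_pos; [apply Lm_nonneg|apply Rabs_pos]).
 destruct (ydiff n Lam X P r t t' a b k _ HL Hr Ha Hb Hk D0 (cs_lip_hyp n Lam t t')) as [A B].
 unfold Cy. split; [eapply Rle_trans; [exact A|]|eapply Rle_trans; [exact B|]]; right; ring. Qed.

Lemma Xr_nonneg n X P r : Lip_X n X P -> 0 < r -> 0 <= X r.
Proof. intros HL Hr. assert (vnorm n (fun _ => (0, 0)) < r).
 { unfold vnorm. replace (sumR n (fun k => cnorm2 (0, 0))) with 0. rewrite sqrt_0; auto.
   transitivity (sumR n (fun _ => 0)). clear; induction n; simpl; auto; rewrite <- IHn; ring.
   apply sumR_ext; intros; unfold cnorm2; simpl; ring. }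
 pose proof (Pbound n X P r _ HL ltac:(lra) H). pose proof (vnorm_nonneg n (P (fun _ => (0, 0)))). lra. Qed.

Lemma Cy_nonneg n Lam X r : 0 <= X r -> 0 <= r -> 0 <= Cy n Lam X r.
Proof. intros. unfold Cy. pose proof (Lm_nonneg n Lam).
 apply Rplus_le_le_0_compat; repeat apply Rmult_le_pos; lra. Qed.

Lemma g_tlip n Lam X P r a k : Lip_X n X P -> 0 < r -> vnorm n a < r -> (k < n)%nat ->
  forall t t', Rabs (gre Lam P a k t' - gre Lam P a k t) <= Cy n Lam X r * Rabs (t' - t) /\
               Rabs (gim Lam P a k t' - gim Lam P a k t) <= Cy n Lam X r * Rabs (t' - t).
Proof. intros HL Hr Ha Hk t t'. destruct (y_lip n Lam X P r a a t' t k HL ltac:(lra) Ha Ha Hk) as [A B].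
 rewrite vnorm_sub_self, Rmult_0_r, Rplus_0_r in A, B. unfold gre, gim; split; auto. Qed.

Lemma g_exRInt n Lam X P r a k x y : Lip_X n X P -> 0 < r -> vnorm n a < r -> (k < n)%nat ->
  ex_RInt (gre Lam P a k) x y /\ ex_RInt (gim Lam P a k) x y.
Proof. intros HL Hr Ha Hk. assert (HC := Cy_nonneg n Lam X r (Xr_nonneg n X P r HL Hr) ltac:(lra)).
 split; apply (exRInt_lip _ (Cy n Lam X r)); auto; intros; apply (g_tlip n Lam X P r a k HL Hr Ha Hk). Qed.

Lemma g_AP n Lam X P r e0 : Lip_X n X P -> 0 < r -> 0 < e0 -> exists L, 0 <= L /\
  forall a k, vnorm n a < r -> (k < n)%nat -> AP (gre Lam P a k) e0 L /\ AP (gim Lam P a k) e0 L.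
Proof.
 intros HL Hr He. assert (HX := Xr_nonneg n X P r HL Hr).
 set (dl := e0 / (4 * X r + 8 * X r * r + 1)).
 assert (Hq : 0 < 4 * X r + 8 * X r * r + 1) by nra.
 assert (Hdl : 0 < dl) by (unfold dl; apply Rdiv_lt_0_compat; lra).
 destruct (density n Lam dl Hdl) as [L [HL0 HD]]. exists L. split; auto.
 intros a k Ha Hk.
 assert (K : forall x, exists tau, Rabs (tau - x) <= L /\ forall t,
   Rabs (gre Lam P a k (t + tau) - gre Lam P a k t) <= e0 /\ Rabs (gim Lam P a k (t + tau) - gim Lam P a k t) <= e0).
 { intros x. destruct (HD x) as [tau [Ht Hc]]. exists tau. split; auto. intros t.
   assert (Hcs : forall j, (j < n)%nat -> Rabs (cos (Lam j * (t + tau)) - cos (Lam j * t)) <= 2 * dl /\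
                                         Rabs (sin (Lam j * (t + tau)) - sin (Lam j * t)) <= 2 * dl).
   { intros j Hj. destruct (Hc j Hj) as [C1 C2].
     replace (Lam j * (t + tau)) with (Lam j * t + Lam j * tau) by ring. rewrite cos_plus, sin_plus.
     pose proof (COS_bound (Lam j * t)). pose proof (SIN_bound (Lam j * t)).
     apply Rabs_le_between in C1; apply Rabs_le_between in C2.
     split; apply Rabs_le; split; nra. }
   destruct (ydiff n Lam X P r (t + tau) t a a k (2 * dl) HL ltac:(lra) Ha Ha Hk ltac:(lra) Hcs) as [A B].
   rewrite vnorm_sub_self, Rplus_0_l in A, B.
   assert (E : 2 * (2 * dl) * X r + 2 * X r * (2 * (2 * dl) * r) = dl * (4 * X r + 8 * X r * r)) by ring.
   assert (dl * (4 * X r + 8 * X r * r) <= e0).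
   { unfold dl. apply Rle_trans with (e0 / (4 * X r + 8 * X r * r + 1) * (4 * X r + 8 * X r * r + 1)).
     apply Rmult_le_compat_l. apply Rlt_le, Rdiv_lt_0_compat; lra. lra. right; field; lra. }
   unfold gre, gim. split; lra. }
 split; intros x; destruct (K x) as [tau [H1 H2]]; exists tau; split; auto; intros t; apply H2.
Qed.
Lemma avg_unique n Lam P a v w k : is_average n Lam P a v -> is_average n Lam P a w -> (k < n)%nat ->
  fst (v k) = fst (w k) /\ snd (v k) = snd (w k).
Proof.
 intros Hv Hw Hk.
 assert (G : forall x y : R, (forall e, 0 < e -> Rabs (x - y) < 2 * e) -> x = y).
 { intros x y H. destruct (Req_dec x y); auto. exfalso.
   assert (0 < Rabs (x - y)) by (apply Rabs_pos_lt; lra).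
   specialize (H (Rabs (x - y) / 4) ltac:(lra)). lra. }
 split; apply G; intros e He;
 destruct (Hv k Hk e He) as [M1 [HM1 H1]]; destruct (Hw k Hk e He) as [M2 [HM2 H2]];
 set (T := M1 + M2 + 1); assert (HT : Rabs T = T) by (apply Rabs_pos_eq; unfold T; lra);
 destruct (H1 T ltac:(rewrite HT; unfold T; lra)) as [A1 B1]; destruct (H2 T ltac:(rewrite HT; unfold T; lra)) as [A2 B2];
 simpl in A1, A2, B1, B2.
 - apply Rabs_lt_between in A1; apply Rabs_lt_between in A2. apply Rabs_def1; lra.
 - apply Rabs_lt_between in B1; apply Rabs_lt_between in B2. apply Rabs_def1; lra.
Qed.

Definition limprop (g : R -> R) (c : R) : Prop :=
  Un_cv (useq g) c /\ forall eta, 0 < eta -> exists T1, 0 < T1 /\ forall S, T1 < Rabs S -> Rabs (RInt g 0 S / S - c) < eta.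

Lemma avgP_char n Lam X P r a : Lip_X n X P -> 0 < r -> vnorm n a < r -> forall k, (k < n)%nat ->
  Un_cv (useq (gre Lam P a k)) (fst (avgP n Lam P a k)) /\ Un_cv (useq (gim Lam P a k)) (snd (avgP n Lam P a k)).
Proof.
 intros HL Hr Ha.
 assert (Ex : forall k, (k < n)%nat -> (exists c, limprop (gre Lam P a k) c) /\ (exists c, limprop (gim Lam P a k) c)).
 { intros k Hk. split.
   - apply (avg_exists _ (X r)). intros; apply (g_exRInt n Lam X P r a k); auto.
     intros t; apply (g_bound n Lam X P r a k t HL); auto; lra.
     intros e0 He0. destruct (g_AP n Lam X P r e0 HL Hr He0) as [L [_ HAP]]. exists L; apply (HAP a k Ha Hk).
   - apply (avg_exists _ (X r)). intros; apply (g_exRInt n Lam X P r a k); auto.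
     intros t; apply (g_bound n Lam X P r a k t HL); auto; lra.
     intros e0 He0. destruct (g_AP n Lam X P r e0 HL Hr He0) as [L [_ HAP]]. exists L; apply (HAP a k Ha Hk). }
 set (cre := fun k => epsilon (inhabits 0) (limprop (gre Lam P a k))).
 set (cim := fun k => epsilon (inhabits 0) (limprop (gim Lam P a k))).
 assert (Sre : forall k, (k < n)%nat -> limprop (gre Lam P a k) (cre k)) by (intros k Hk; unfold cre, cim; apply epsilon_spec, (Ex k Hk)).
 assert (Sim : forall k, (k < n)%nat -> limprop (gim Lam P a k) (cim k)) by (intros k Hk; unfold cre, cim; apply epsilon_spec, (Ex k Hk)).
 set (v := fun k => (cre k, cim k)).
 assert (Hv : is_average n Lam P a v).
 { intros k Hk e He. destruct (Sre k Hk) as [_ L1]. destruct (Sim k Hk) as [_ L2].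
   destruct (L1 e He) as [T1 [HT1 K1]]. destruct (L2 e He) as [T2 [HT2 K2]].
   exists (T1 + T2). split. lra. intros T HT. simpl.
   rewrite !RInt_bridge.
   split. apply (K1 T); lra. apply (K2 T); lra.
   apply (g_exRInt n Lam X P r a k 0 T); auto. apply (g_exRInt n Lam X P r a k 0 T); auto. }
 assert (HA : is_average n Lam P a (avgP n Lam P a)) by (unfold avgP; apply epsilon_spec; exists v; auto).
 intros k Hk. destruct (avg_unique n Lam P a _ _ k HA Hv Hk) as [E1 E2]. rewrite E1, E2. simpl.
 split; [apply (Sre k Hk)|apply (Sim k Hk)].
Qed.
Lemma avgP_rate n Lam X P r e0 : Lip_X n X P -> 0 < r -> 0 < e0 -> exists L, 0 <= L /\
  forall a k, vnorm n a < r -> (k < n)%nat -> forall x T, 0 < T ->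
   Rabs (RInt (gre Lam P a k) x (x + T) / T - fst (avgP n Lam P a k)) <= 2 * e0 + 4 * X r * L / T /\
   Rabs (RInt (gim Lam P a k) x (x + T) / T - snd (avgP n Lam P a k)) <= 2 * e0 + 4 * X r * L / T.
Proof.
 intros HL Hr He. destruct (g_AP n Lam X P r e0 HL Hr He) as [L [HL0 HAP]]. exists L; split; auto.
 intros a k Ha Hk x T HT. destruct (HAP a k Ha Hk) as [A1 A2].
 destruct (avgP_char n Lam X P r a HL Hr Ha k Hk) as [U1 U2].
 split.
 - apply (avg_rate (gre Lam P a k) (X r) e0 L); auto. intros; apply (g_exRInt n Lam X P r a k); auto.
   intros t; apply (g_bound n Lam X P r a k t HL); auto; lra.
 - apply (avg_rate (gim Lam P a k) (X r) e0 L); auto. intros; apply (g_exRInt n Lam X P r a k); auto.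
   intros t; apply (g_bound n Lam X P r a k t HL); auto; lra.
Qed.

Lemma avg_diff_bound (f g : R -> R) T c : 0 < T -> ex_RInt f 0 T -> ex_RInt g 0 T ->
  (forall t, Rabs (f t - g t) <= c) -> Rabs (RInt f 0 T / T - RInt g 0 T / T) <= c.
Proof.
 intros HT Hf Hg H.
 assert (E : RInt f 0 T / T - RInt g 0 T / T = (RInt f 0 T - RInt g 0 T) / T) by (field; lra).
 rewrite E, <- RInt_sub by auto.
 assert (B : Rabs (RInt (fun x => f x - g x) 0 T) <= c * Rabs (T - 0)).
 { apply RInt_abs_le. apply ex_RInt_sub; auto. intros; apply H. }
 rewrite Rminus_0_r, (Rabs_pos_eq T) in B by lra.
 unfold Rdiv. rewrite Rabs_mult, Rabs_inv, (Rabs_pos_eq T) by lra.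
 apply Rmult_le_reg_r with T; auto. rewrite Rmult_assoc, Rinv_l, Rmult_1_r by lra. auto.
Qed.
Lemma avgP_lip n Lam X P r a b k : Lip_X n X P -> 0 < r -> vnorm n a < r -> vnorm n b < r -> (k < n)%nat ->
  Rabs (fst (avgP n Lam P a k) - fst (avgP n Lam P b k)) <= 2 * X r * vnorm n (vsub a b) /\
  Rabs (snd (avgP n Lam P a k) - snd (avgP n Lam P b k)) <= 2 * X r * vnorm n (vsub a b).
Proof.
 intros HL Hr Ha Hb Hk. assert (HX := Xr_nonneg n X P r HL Hr).
 assert (Main : forall ee, 0 < ee ->
   Rabs (fst (avgP n Lam P a k) - fst (avgP n Lam P b k)) <= 2 * X r * vnorm n (vsub a b) + ee /\
   Rabs (snd (avgP n Lam P a k) - snd (avgP n Lam P b k)) <= 2 * X r * vnorm n (vsub a b) + ee).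
 { intros ee Hee. destruct (avgP_rate n Lam X P r (ee / 8) HL Hr ltac:(lra)) as [L [HL0 HR]].
   set (T := 1 + 16 * X r * L / ee).
   assert (Hq : 0 <= 16 * X r * L / ee) by (apply Rmult_le_pos; [nra|apply Rlt_le, Rinv_0_lt_compat; lra]).
   assert (HT : 0 < T) by (unfold T; lra).
   assert (K : 2 * (ee / 8) + 4 * X r * L / T <= ee / 2).
   { assert (4 * X r * L / T <= ee / 4); [|lra].
     apply Rmult_le_reg_r with T; auto. replace (4 * X r * L / T * T) with (4 * X r * L) by (field; lra).
     unfold T. replace (ee / 4 * (1 + 16 * X r * L / ee)) with (ee / 4 + 4 * X r * L) by (field; lra). lra. }
   destruct (HR a k Ha Hk 0 T HT) as [A1 A2]. destruct (HR b k Hb Hk 0 T HT) as [B1 B2].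
   rewrite Rplus_0_l in A1, A2, B1, B2.
   assert (D : forall t, Rabs (gre Lam P a k t - gre Lam P b k t) <= 2 * X r * vnorm n (vsub a b) /\
                         Rabs (gim Lam P a k t - gim Lam P b k t) <= 2 * X r * vnorm n (vsub a b)).
   { intros t. destruct (y_lip n Lam X P r a b t t k HL ltac:(lra) Ha Hb Hk) as [E1 E2].
     rewrite Rminus_eq_0, Rabs_R0, Rmult_0_r, Rplus_0_l in E1, E2. unfold gre, gim; auto. }
   assert (I1 : Rabs (RInt (gre Lam P a k) 0 T / T - RInt (gre Lam P b k) 0 T / T) <= 2 * X r * vnorm n (vsub a b)).
   { assert (Ea := proj1 (g_exRInt n Lam X P r a k 0 T HL Hr Ha Hk)).
     assert (Eb := proj1 (g_exRInt n Lam X P r b k 0 T HL Hr Hb Hk)).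
     assert (Dre : forall t, Rabs (gre Lam P a k t - gre Lam P b k t) <= 2 * X r * vnorm n (vsub a b)) by (intros; apply D).
     exact (avg_diff_bound (gre Lam P a k) (gre Lam P b k) T _ HT Ea Eb Dre). }
   assert (I2 : Rabs (RInt (gim Lam P a k) 0 T / T - RInt (gim Lam P b k) 0 T / T) <= 2 * X r * vnorm n (vsub a b)).
   { assert (Ea := proj2 (g_exRInt n Lam X P r a k 0 T HL Hr Ha Hk)).
     assert (Eb := proj2 (g_exRInt n Lam X P r b k 0 T HL Hr Hb Hk)).
     assert (Dre : forall t, Rabs (gim Lam P a k t - gim Lam P b k t) <= 2 * X r * vnorm n (vsub a b)) by (intros; apply D).
     exact (avg_diff_bound (gim Lam P a k) (gim Lam P b k) T _ HT Ea Eb Dre). }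
   set (ca := fst (avgP n Lam P a k)) in *. set (cb := fst (avgP n Lam P b k)) in *.
   set (da := snd (avgP n Lam P a k)) in *. set (db := snd (avgP n Lam P b k)) in *.
   set (ma := RInt (gre Lam P a k) 0 T / T) in *. set (mb := RInt (gre Lam P b k) 0 T / T) in *.
   set (na := RInt (gim Lam P a k) 0 T / T) in *. set (nb := RInt (gim Lam P b k) 0 T / T) in *.
   set (Q := 2 * (ee / 8) + 4 * X r * L / T) in *. set (V := 2 * X r * vnorm n (vsub a b)) in *.
   clear D HR.
   apply Rabs_le_between in A1; apply Rabs_le_between in A2; apply Rabs_le_between in B1; apply Rabs_le_between in B2.
   apply Rabs_le_between in I1; apply Rabs_le_between in I2.
   split; apply Rabs_le; lra. }
 split; apply le_epsilon; intros; apply Main; auto.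
Qed.
Lemma PIECE (G Ga C : R -> R) al h ca A Bq : 0 <= h -> 0 <= A ->
  ex_RInt G al (al + h) -> ex_RInt Ga al (al + h) -> ex_RInt C al (al + h) ->
  (forall s, al <= s <= al + h -> Rabs (G s - Ga s) <= A * h) ->
  (forall s, al <= s <= al + h -> Rabs (C s - ca) <= A * h) ->
  Rabs (RInt Ga al (al + h) - h * ca) <= Bq ->
  Rabs (RInt (fun s => G s - C s) al (al + h)) <= 2 * A * h * h + Bq.
Proof.
 intros Hh HA EG EGa EC H1 H2 H3.
 rewrite (RInt_sub G C) by auto.
 assert (B1 : Rabs (RInt (fun s => G s - Ga s) al (al + h)) <= A * h * Rabs (al + h - al)).
 { apply RInt_abs_le. apply ex_RInt_sub; auto. intros s Hs; apply H1. rewrite Rmin_left, Rmax_right in Hs; lra. }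
 assert (B2 : Rabs (RInt (fun s => C s - ca) al (al + h)) <= A * h * Rabs (al + h - al)).
 { apply RInt_abs_le. apply ex_RInt_sub; auto. apply ex_RInt_const. intros s Hs; apply H2. rewrite Rmin_left, Rmax_right in Hs; lra. }
 rewrite (RInt_sub G Ga) in B1 by auto.
 rewrite (RInt_sub C (fun _ => ca)) in B2 by (auto; apply ex_RInt_const).
 rewrite RInt_cst in B2.
 replace (al + h - al) with h in B1, B2 by ring. rewrite (Rabs_pos_eq h) in B1, B2 by lra.
 set (iG := RInt G al (al + h)) in *. set (iGa := RInt Ga al (al + h)) in *. set (iC := RInt C al (al + h)) in *.
 apply Rabs_le_between in B1; apply Rabs_le_between in B2; apply Rabs_le_between in H3.
 apply Rabs_le. lra.
Qed.

Lemma SCALE (f : R -> R) eps al h c Q1 Q2 : (forall x y, ex_RInt f x y) -> 0 < eps -> 0 <= h ->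
  (forall x T, 0 < T -> Rabs (RInt f x (x + T) / T - c) <= Q1 + Q2 / T) -> 0 <= Q1 -> 0 <= Q2 ->
  Rabs (@RInt R_CompleteNormedModule (fun s => f (s / eps)) al (al + h) - h * c) <= h * Q1 + eps * Q2.
Proof.
 intros Hf He Hh HR HQ1 HQ2. destruct (Req_dec h 0) as [E|E].
 - subst h. rewrite Rplus_0_r, RInt_point. unfold zero; simpl. rewrite Rmult_0_l, Rminus_0_r, Rabs_R0. nra.
 - rewrite (RInt_scale f al (al + h) eps) by auto.
   set (T := h / eps). assert (HT : 0 < T) by (unfold T; apply Rdiv_lt_0_compat; lra).
   replace ((al + h) / eps) with (al / eps + T) by (unfold T; field; lra).
   specialize (HR (al / eps) T HT).
   replace (eps * RInt f (al / eps) (al / eps + T) - h * c) with (h * (RInt f (al / eps) (al / eps + T) / T - c)) by (unfold T; field; lra).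
   rewrite Rabs_mult, (Rabs_pos_eq h) by lra.
   eapply Rle_trans. apply Rmult_le_compat_l. lra. exact HR.
   right. unfold T. field. lra.
Qed.

Lemma SUM (F : R -> R) lo hi (N : nat) Q : lo <= hi -> (0 < N)%nat ->
  (forall x y, lo <= x <= hi -> lo <= y <= hi -> ex_RInt F x y) ->
  (forall al, lo <= al -> al + (hi - lo) / INR N <= hi -> Rabs (RInt F al (al + (hi - lo) / INR N)) <= Q) ->
  Rabs (RInt F lo hi) <= INR N * Q.
Proof.
 intros Hlh HN Hi HQ. set (h := (hi - lo) / INR N).
 assert (HNr : 0 < INR N) by (apply lt_0_INR; lia).
 assert (Hh : 0 <= h) by (unfold h; apply Rmult_le_pos; [lra|apply Rlt_le, Rinv_0_lt_compat; lra]).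
 assert (HNh : INR N * h = hi - lo) by (unfold h; field; lra).
 assert (K : forall m, (m <= N)%nat -> Rabs (RInt F lo (lo + INR m * h)) <= INR m * Q).
 { induction m; intros Hm.
   - simpl. rewrite Rmult_0_l, Rplus_0_r, RInt_point. unfold zero; simpl. rewrite Rabs_R0; lra.
   - assert (Hm' : INR (S m) <= INR N) by (apply le_INR; auto). rewrite S_INR in Hm' |- *.
     assert (Hpos : 0 <= INR m) by apply pos_INR.
     assert (A1 : lo <= lo + INR m * h <= hi) by nra.
     assert (A2 : lo <= lo + (INR m + 1) * h <= hi) by nra.
     rewrite <- (RInt_chasles F lo (lo + INR m * h) (lo + (INR m + 1) * h)) by (apply Hi; lra).
     specialize (IHm ltac:(lia)).
     assert (B := HQ (lo + INR m * h) ltac:(nra) ltac:(fold h; nra)). fold h in B.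
     replace (lo + INR m * h + h) with (lo + (INR m + 1) * h) in B by ring.
     eapply Rle_trans. apply Rabs_triang. lra. }
 specialize (K N (le_n N)). rewrite HNh in K. replace (lo + (hi - lo)) with hi in K by ring. auto.
Qed.
Lemma MAIN_ABS (Y Cf : R -> R) (g : R -> R -> R) th eps A Kc e0 Q2 (N : nat) tau :
 0 < eps -> 0 <= A -> 0 <= Kc -> 0 <= e0 -> 0 <= Q2 -> (0 < N)%nat -> Rabs tau <= th ->
 (forall s s', Rabs s <= th -> Rabs s' <= th -> Rabs (Y s' - Y s) <= Kc * Rabs (s' - s)) ->
 (forall s s', Rabs s <= th -> Rabs s' <= th -> Rabs (Cf s' - Cf s) <= A * Rabs (s' - s)) ->
 (forall al s, Rabs al <= th -> Rabs s <= th -> Rabs (Y s - g al (s / eps)) <= A * Rabs (s - al)) ->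
 (forall al x y, Rabs al <= th -> ex_RInt (g al) x y) ->
 (forall al, Rabs al <= th -> forall x T, 0 < T -> Rabs (RInt (g al) x (x + T) / T - Cf al) <= 2 * e0 + Q2 / T) ->
 Rabs (RInt (fun s => Y s - Cf s) 0 tau) <= 2 * A * th * th / INR N + 2 * e0 * th + INR N * eps * Q2.
Proof.
 intros He HA HK He0 HQ2 HN Ht HY HC HG Hg HR.
 assert (Hth : 0 <= th) by (pose proof (Rabs_pos tau); lra).
 assert (Hcw : forall f K, 0 <= K -> (forall s s', Rabs s <= th -> Rabs s' <= th -> Rabs (f s' - f s) <= K * Rabs (s' - s)) ->
            forall x y, -th <= x <= th -> -th <= y <= th -> ex_RInt f x y).
 { intros f K HK' Hf x y Hx Hy. apply (exRInt_cw f (-th) th); auto.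
   apply (lip_cw f K); auto. intros t t' H1 H2. apply Hf; apply Rabs_le; lra. }
 assert (EY := Hcw Y Kc HK HY). assert (EC := Hcw Cf A HA HC).
 set (F := fun s => Y s - Cf s).
 assert (EF : forall x y, -th <= x <= th -> -th <= y <= th -> ex_RInt F x y).
 { intros; apply ex_RInt_sub; auto. }
 set (lo := Rmin 0 tau). set (hi := Rmax 0 tau).
 assert (Hlo : lo <= hi /\ -th <= lo /\ hi <= th /\ hi - lo = Rabs tau).
 { apply Rabs_le_between in Ht. unfold lo, hi, Rmin, Rmax. destruct Rle_dec.
   rewrite Rabs_pos_eq; lra. rewrite Rabs_left; lra. }
 destruct Hlo as [H1 [H2 [H3 H4]]].
 assert (Eq : Rabs (RInt F 0 tau) = Rabs (RInt F lo hi)).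
 { unfold lo, hi, Rmin, Rmax. destruct Rle_dec; auto.
   rewrite <- (opp_RInt_swap F tau 0). unfold opp; simpl. rewrite Rabs_Ropp; auto.
   apply EF; apply Rabs_le_between in Ht; lra. }
 change (Rabs (RInt F 0 tau) <= 2 * A * th * th / INR N + 2 * e0 * th + INR N * eps * Q2).
 rewrite Eq.
 set (h := (hi - lo) / INR N).
 assert (HNr : 0 < INR N) by (apply lt_0_INR; lia).
 assert (Hh : 0 <= h) by (unfold h; apply Rmult_le_pos; [lra|apply Rlt_le, Rinv_0_lt_compat; lra]).
 eapply Rle_trans. apply (SUM F lo hi N (2 * A * h * h + (h * (2 * e0) + eps * Q2))); auto.
 - intros x y Hx Hy; apply EF; lra.
 - intros al Hal1 Hal2. fold h in Hal2 |- *.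
   assert (Hal : Rabs al <= th) by (apply Rabs_le; lra).
   apply (PIECE Y (fun s => g al (s / eps)) Cf al h (Cf al) A); auto.
   + apply EY; lra.
   + assert (E := ex_RInt_comp_lin (g al) (/ eps) 0 al (al + h) (Hg al _ _ Hal)).
     apply (ex_RInt_scal _ _ _ eps) in E.
     eapply ex_RInt_ext; [|exact E]. intros x _. unfold scal; simpl; unfold mult; simpl.
     change (@eq R (eps * (/ eps * g al (/ eps * x + 0))) (g al (x / eps))).
     replace (/ eps * x + 0) with (x / eps) by (unfold Rdiv; ring). field; lra.
   + apply EC; lra.
   + intros s Hs. eapply Rle_trans. apply HG; auto. apply Rabs_le; lra.
     apply Rmult_le_compat_l; auto. rewrite Rabs_pos_eq; lra.
   + intros s Hs. eapply Rle_trans. apply HC; auto. apply Rabs_le; lra.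
     apply Rmult_le_compat_l; auto. rewrite Rabs_pos_eq; lra.
   + apply (SCALE (g al) eps al h (Cf al) (2 * e0) Q2); auto. lra.
 - unfold h. set (D := hi - lo) in *.
   assert (0 <= D) by (rewrite H4; apply Rabs_pos). assert (D <= th) by lra.
   assert (D * D <= th * th) by (apply Rmult_le_compat; lra).
   replace (INR N * (2 * A * (D / INR N) * (D / INR N) + (D / INR N * (2 * e0) + eps * Q2)))
     with (2 * A * (D * D) / INR N + 2 * e0 * D + INR N * eps * Q2) by (field; lra).
   assert (2 * A * (D * D) / INR N <= 2 * A * th * th / INR N).
   { unfold Rdiv. apply Rmult_le_compat_r. apply Rlt_le, Rinv_0_lt_compat; lra. nra. }
   assert (2 * e0 * D <= 2 * e0 * th) by (apply Rmult_le_compat_l; lra). lra.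
Qed.

Lemma LIPEX (Y Cf : R -> R) th Kc A tau : 0 <= Kc -> 0 <= A -> Rabs tau <= th ->
 (forall s s', Rabs s <= th -> Rabs s' <= th -> Rabs (Y s' - Y s) <= Kc * Rabs (s' - s)) ->
 (forall s s', Rabs s <= th -> Rabs s' <= th -> Rabs (Cf s' - Cf s) <= A * Rabs (s' - s)) ->
 ex_RInt (fun s => Y s - Cf s) 0 tau.
Proof.
 intros HK HA Ht HY HC. assert (Hth : 0 <= th) by (pose proof (Rabs_pos tau); lra).
 apply Rabs_le_between in Ht.
 apply ex_RInt_sub; [apply (exRInt_cw Y (-th) th)|apply (exRInt_cw Cf (-th) th)]; try lra.
 apply (lip_cw Y Kc); auto. intros t t' H1 H2. apply HY; apply Rabs_le; lra.
 apply (lip_cw Cf A); auto. intros t t' H1 H2. apply HC; apply Rabs_le; lra.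
Qed.
Definition rate_hyp (n : nat) (Lam : nat -> R) (X : R -> R) (P : vec -> vec) (r e0 L : R) : Prop :=
  forall b j, vnorm n b < r -> (j < n)%nat -> forall x T, 0 < T ->
     Rabs (RInt (gre Lam P b j) x (x + T) / T - fst (avgP n Lam P b j)) <= 2 * e0 + 4 * X r * L / T /\
     Rabs (RInt (gim Lam P b j) x (x + T) / T - snd (avgP n Lam P b j)) <= 2 * e0 + 4 * X r * L / T.

Lemma comp_bound n Lam X P R0 eps v0 a k e0 L (N : nat) tau :
 nondecr_cont_nonneg X -> Lip_X n X P -> 0 < R0 -> 0 < X (2 * R0) -> vnorm n v0 <= R0 -> 0 < eps ->
 is_solution n Lam P eps (R0 / X (2 * R0)) v0 a -> (k < n)%nat -> 0 <= e0 -> 0 <= L ->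
 rate_hyp n Lam X P (2 * R0 + 1) e0 L -> (0 < N)%nat -> Rabs tau <= R0 / X (2 * R0) ->
 Rabs (fst (Ifun n Lam P eps a tau k)) <=
   2 * (2 * X (2 * R0 + 1) * X (2 * R0 + 1)) * (R0 / X (2 * R0)) * (R0 / X (2 * R0)) / INR N
   + 2 * e0 * (R0 / X (2 * R0)) + INR N * eps * (4 * X (2 * R0 + 1) * L) /\
 Rabs (snd (Ifun n Lam P eps a tau k)) <=
   2 * (2 * X (2 * R0 + 1) * X (2 * R0 + 1)) * (R0 / X (2 * R0)) * (R0 / X (2 * R0)) / INR N
   + 2 * e0 * (R0 / X (2 * R0)) + INR N * eps * (4 * X (2 * R0 + 1) * L).
Proof.
 intros HXn HL HR HX Hv He Hs Hk He0 HL0 Hrate HN Ht.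
 set (th := R0 / X (2 * R0)) in *. set (r := 2 * R0 + 1) in *.
 assert (Hr : 0 < r) by (unfold r; lra).
 assert (HXr : 0 <= X r) by (apply (Xr_nonneg n X P r HL Hr)).
 assert (Ball : forall s, Rabs s <= th -> vnorm n (a s) < r).
 { intros s Hs'. pose proof (confine n Lam X P R0 eps v0 a HL HR HX Hv Hs s Hs'). unfold r; lra. }
 assert (Alip : forall x y, Rabs x <= th -> Rabs y <= th -> vnorm n (vsub (a y) (a x)) <= X r * Rabs (y - x)).
 { intros x y Hx Hy. apply (alip n Lam X P R0 eps v0 a HXn HL HR HX Hv Hs x y Hx Hy). }
 assert (HCy : 0 <= Cy n Lam X r) by (apply Cy_nonneg; lra).
 set (Kc := Cy n Lam X r / eps + 2 * X r * X r).
 assert (HKc : 0 <= Kc) by (unfold Kc; apply Rplus_le_le_0_compat; [apply Rmult_le_pos; [lra|apply Rlt_le, Rinv_0_lt_compat; lra]|nra]).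
 assert (HA : 0 <= 2 * X r * X r) by nra.
 assert (Sdiff : forall s s', Rabs (s' / eps - s / eps) = Rabs (s' - s) / eps).
 { intros. replace (s' / eps - s / eps) with ((s' - s) / eps) by (field; lra).
   unfold Rdiv; rewrite Rabs_mult, Rabs_inv, (Rabs_pos_eq eps) by lra; auto. }
 assert (YL : forall s s', Rabs s <= th -> Rabs s' <= th ->
   Rabs (fst (yflow Lam P (s' / eps) (a s') k) - fst (yflow Lam P (s / eps) (a s) k)) <= Kc * Rabs (s' - s) /\
   Rabs (snd (yflow Lam P (s' / eps) (a s') k) - snd (yflow Lam P (s / eps) (a s) k)) <= Kc * Rabs (s' - s)).
 { intros s s' H1 H2. destruct (y_lip n Lam X P r (a s') (a s) (s' / eps) (s / eps) k HL ltac:(lra) (Ball s' H2) (Ball s H1) Hk) as [A1 A2].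
   rewrite Sdiff in A1, A2. assert (V := Alip s s' H1 H2).
   assert (E : Kc * Rabs (s' - s) = Cy n Lam X r * (Rabs (s' - s) / eps) + 2 * X r * (X r * Rabs (s' - s))) by (unfold Kc; field; lra).
   rewrite E. assert (2 * X r * vnorm n (vsub (a s') (a s)) <= 2 * X r * (X r * Rabs (s' - s))) by (apply Rmult_le_compat_l; lra).
   split; lra. }
 assert (CL : forall s s', Rabs s <= th -> Rabs s' <= th ->
   Rabs (fst (avgP n Lam P (a s') k) - fst (avgP n Lam P (a s) k)) <= 2 * X r * X r * Rabs (s' - s) /\
   Rabs (snd (avgP n Lam P (a s') k) - snd (avgP n Lam P (a s) k)) <= 2 * X r * X r * Rabs (s' - s)).
 { intros s s' H1 H2. destruct (avgP_lip n Lam X P r (a s') (a s) k HL Hr (Ball s' H2) (Ball s H1) Hk) as [A1 A2].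
   assert (V := Alip s s' H1 H2).
   assert (2 * X r * vnorm n (vsub (a s') (a s)) <= 2 * X r * X r * Rabs (s' - s)) by (replace (2 * X r * X r * Rabs (s' - s)) with (2 * X r * (X r * Rabs (s' - s))) by ring; apply Rmult_le_compat_l; lra).
   split; lra. }
 assert (GL : forall al s, Rabs al <= th -> Rabs s <= th ->
   Rabs (fst (yflow Lam P (s / eps) (a s) k) - gre Lam P (a al) k (s / eps)) <= 2 * X r * X r * Rabs (s - al) /\
   Rabs (snd (yflow Lam P (s / eps) (a s) k) - gim Lam P (a al) k (s / eps)) <= 2 * X r * X r * Rabs (s - al)).
 { intros al s H1 H2. destruct (y_lip n Lam X P r (a s) (a al) (s / eps) (s / eps) k HL ltac:(lra) (Ball s H2) (Ball al H1) Hk) as [A1 A2].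
   rewrite Rminus_eq_0, Rabs_R0, Rmult_0_r, Rplus_0_l in A1, A2.
   assert (V := Alip al s H1 H2).
   assert (2 * X r * vnorm n (vsub (a s) (a al)) <= 2 * X r * X r * Rabs (s - al)) by (replace (2 * X r * X r * Rabs (s - al)) with (2 * X r * (X r * Rabs (s - al))) by ring; apply Rmult_le_compat_l; lra).
   unfold gre, gim. split; lra. }
 assert (HQ : 0 <= 4 * X r * L) by nra.
 split.
 - change (Rabs (Defs.RInt (fun s => fst (yflow Lam P (s / eps) (a s) k) - fst (avgP n Lam P (a s) k)) 0 tau) <=
     2 * (2 * X r * X r) * th * th / INR N + 2 * e0 * th + INR N * eps * (4 * X r * L)).
   rewrite RInt_bridge.
   + apply (MAIN_ABS (fun s => fst (yflow Lam P (s / eps) (a s) k)) (fun s => fst (avgP n Lam P (a s) k))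
             (fun al => gre Lam P (a al) k) th eps (2 * X r * X r) Kc e0 (4 * X r * L) N tau); auto.
     * intros; apply YL; auto.
     * intros; apply CL; auto.
     * intros; apply GL; auto.
     * intros al x y Hal. apply (g_exRInt n Lam X P r (a al) k x y HL Hr (Ball al Hal) Hk).
     * intros al Hal x T HT. destruct (Hrate (a al) k (Ball al Hal) Hk x T HT) as [R1 _].
       replace (4 * X r * L / T) with (4 * X r * L / T) in R1 by ring. exact R1.
   + apply (LIPEX _ _ th Kc (2 * X r * X r)); auto. intros; apply YL; auto. intros; apply CL; auto.
 - change (Rabs (Defs.RInt (fun s => snd (yflow Lam P (s / eps) (a s) k) - snd (avgP n Lam P (a s) k)) 0 tau) <=
     2 * (2 * X r * X r) * th * th / INR N + 2 * e0 * th + INR N * eps * (4 * X r * L)).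
   rewrite RInt_bridge.
   + apply (MAIN_ABS (fun s => snd (yflow Lam P (s / eps) (a s) k)) (fun s => snd (avgP n Lam P (a s) k))
             (fun al => gim Lam P (a al) k) th eps (2 * X r * X r) Kc e0 (4 * X r * L) N tau); auto.
     * intros; apply YL; auto.
     * intros; apply CL; auto.
     * intros; apply GL; auto.
     * intros al x y Hal. apply (g_exRInt n Lam X P r (a al) k x y HL Hr (Ball al Hal) Hk).
     * intros al Hal x T HT. destruct (Hrate (a al) k (Ball al Hal) Hk x T HT) as [_ R2]. exact R2.
   + apply (LIPEX _ _ th Kc (2 * X r * X r)); auto. intros; apply YL; auto. intros; apply CL; auto.
Qed.
Definition Bnd (n : nat) (Xr th e0 L : R) (N : nat) (eps : R) : R :=
  2 * INR n * (2 * (2 * Xr * Xr) * th * th / INR N + 2 * e0 * th + INR N * eps * (4 * Xr * L)).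

Lemma Bnd_nonneg n Xr th e0 L N eps : 0 <= Xr -> 0 <= th -> 0 <= e0 -> 0 <= L -> (0 < N)%nat -> 0 <= eps ->
  0 <= Bnd n Xr th e0 L N eps.
Proof. intros. unfold Bnd. assert (0 < INR N) by (apply lt_0_INR; lia). pose proof (pos_INR n).
 apply Rmult_le_pos. lra. repeat apply Rplus_le_le_0_compat.
 apply Rmult_le_pos. repeat apply Rmult_le_pos; lra. apply Rlt_le, Rinv_0_lt_compat; lra.
 repeat apply Rmult_le_pos; lra. repeat apply Rmult_le_pos; lra. Qed.

Lemma full_bound n Lam X P R0 eps v0 a e0 L (N : nat) tau :
 nondecr_cont_nonneg X -> Lip_X n X P -> 0 < R0 -> 0 < X (2 * R0) -> vnorm n v0 <= R0 -> 0 < eps ->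
 is_solution n Lam P eps (R0 / X (2 * R0)) v0 a -> 0 <= e0 -> 0 <= L ->
 rate_hyp n Lam X P (2 * R0 + 1) e0 L -> (0 < N)%nat -> Rabs tau <= R0 / X (2 * R0) ->
 vnorm n (Ifun n Lam P eps a tau) <= Bnd n (X (2 * R0 + 1)) (R0 / X (2 * R0)) e0 L N eps.
Proof.
 intros. eapply Rle_trans. apply vnorm_le_sum.
 unfold Bnd. set (BB := 2 * (2 * X (2 * R0 + 1) * X (2 * R0 + 1)) * (R0 / X (2 * R0)) * (R0 / X (2 * R0)) / INR N +
   2 * e0 * (R0 / X (2 * R0)) + INR N * eps * (4 * X (2 * R0 + 1) * L)).
 replace (2 * INR n * BB) with (INR n * (2 * BB)) by ring. rewrite <- sumR_const. apply sumR_le. intros k Hk.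
 destruct (comp_bound n Lam X P R0 eps v0 a k e0 L N tau) as [A B]; auto. unfold BB; lra.
Qed.

Theorem lemma4p2 (n : nat) (Lam : nat -> R) (X : R -> R) (P : vec -> vec) (R0 : R) :
  (forall k, (k < n)%nat -> Lam k <> 0) ->
  nondecr_cont_nonneg X ->
  Lip_X n X P ->
  0 < R0 -> 0 < X (2 * R0) ->
  exists kappa : R -> R,
    (forall e, 0 < e -> exists d, 0 < d /\
       forall eps, 0 < eps < d -> Rabs (kappa eps) < e) /\
    (forall (v0 : vec), vnorm n v0 <= R0 ->
     forall eps, 0 < eps <= 1 ->
     forall a : R -> vec, is_solution n Lam P eps (R0 / X (2 * R0)) v0 a ->
     forall tau, Rabs tau <= R0 / X (2 * R0) ->
       vnorm n (Ifun n Lam P eps a tau) <= kappa eps).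
Proof.
 intros _ HXn HL HR HX.
 set (th := R0 / X (2 * R0)).
 set (r := 2 * R0 + 1).
 assert (Hth : 0 < th) by (unfold th; apply Rdiv_lt_0_compat; lra).
 assert (Hr : 0 < r) by (unfold r; lra).
 assert (HXr : 0 <= X r) by (apply (Xr_nonneg n X P r HL Hr)).
 assert (Lex : forall e0, 0 < e0 -> exists L, 0 <= L /\ rate_hyp n Lam X P r e0 L).
 { intros e0 He0. apply (avgP_rate n Lam X P r e0 HL Hr He0). }
 destruct (Lex 1 Rlt_0_1) as [L1 [HL1 HR1]].
 set (S := fun eps z => z = 0 \/ (0 < eps <= 1 /\ exists v0 a tau, vnorm n v0 <= R0 /\
        is_solution n Lam P eps th v0 a /\ Rabs tau <= th /\ z = vnorm n (Ifun n Lam P eps a tau))).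
 assert (Elem : forall eps z, 0 < eps <= 1 -> S eps z -> forall e0 L N, 0 < e0 -> 0 <= L ->
          rate_hyp n Lam X P r e0 L -> (0 < N)%nat -> z <= Bnd n (X r) th e0 L N eps).
 { intros eps z Heps Hz e0 L N He0 HL0 Hrt HN. destruct Hz as [Hz|[_ [v0 [a [tau [Hv [Hs [Ht Hz]]]]]]]].
   - subst z. apply Bnd_nonneg; try lra; auto.
   - subst z. apply (full_bound n Lam X P R0 eps v0 a e0 L N tau); auto; lra. }
 set (B1 := Bnd n (X r) th 1 L1 1 1).
 assert (HB1 : 0 <= B1) by (apply Bnd_nonneg; lra || lia).
 assert (Hlub : forall eps, exists m, is_lub (S eps) m).
 { intros eps. assert (Hb : bound (S eps)).
   { exists B1. intros z Hz. destruct (Rle_dec eps 0) as [E|E].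
     - destruct Hz as [Hz|[[? _] _]]. lra. lra.
     - destruct (Rle_dec eps 1) as [E'|E'].
       + eapply Rle_trans. apply (Elem eps z ltac:(lra) Hz 1 L1 1%nat Rlt_0_1 HL1 HR1 ltac:(lia)).
         unfold B1, Bnd. simpl INR. apply Rmult_le_compat_l. pose proof (pos_INR n); lra.
         apply Rplus_le_compat_l. assert (0 <= 4 * X r * L1) by (apply Rmult_le_pos; [apply Rmult_le_pos|]; lra). apply Rmult_le_compat_r; lra.
       + destruct Hz as [Hz|[[_ ?] _]]. lra. lra. }
   destruct (completeness (S eps) Hb) as [m Hm]. exists 0; left; auto. exists m; auto. }
 set (kappa := fun eps => epsilon (inhabits 0) (is_lub (S eps))).
 assert (Hk : forall eps, is_lub (S eps) (kappa eps)) by (intros; unfold kappa; apply epsilon_spec, Hlub).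
 assert (Hk0 : forall eps, 0 <= kappa eps) by (intros; apply (proj1 (Hk eps)); left; auto).
 exists kappa. split.
 - intros e He. set (W := 2 * INR n + 1). assert (HW : 0 < W) by (unfold W; pose proof (pos_INR n); lra).
   set (e0 := e / (6 * W * (th + 1))).
   assert (He0 : 0 < e0) by (unfold e0; apply Rdiv_lt_0_compat; nra).
   destruct (Lex e0 He0) as [L [HL0 Hrt]].
   destruct (big_nat 1 (12 * W * (2 * X r * X r) * th * th / e)) as [N [HN1 HN2]].
   set (q := 4 * W * (INR N + 1) * (X r * L)).
   assert (Hq : 0 <= q) by (unfold q; pose proof (pos_INR N); repeat apply Rmult_le_pos; lra).
   exists (Rmin 1 (e / (3 * q + 3))). split. apply Rmin_pos. lra. apply Rdiv_lt_0_compat; lra.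
   intros eps [Heps1 Heps2].
   assert (Heps3 : eps < 1) by (eapply Rlt_le_trans; [exact Heps2|apply Rmin_l]).
   assert (Heps4 : eps < e / (3 * q + 3)) by (eapply Rlt_le_trans; [exact Heps2|apply Rmin_r]).
   rewrite Rabs_pos_eq by auto.
   apply Rle_lt_trans with (Bnd n (X r) th e0 L N eps).
   { apply (proj2 (Hk eps)). intros z Hz. apply (Elem eps z ltac:(lra) Hz e0 L N); auto; lia. }
   unfold Bnd. assert (HNr : 0 < INR N) by (apply lt_0_INR; lia).
   assert (T1 : 2 * INR n * (2 * (2 * X r * X r) * th * th / INR N) <= e / 3).
   { assert (HA : 0 <= 2 * X r * X r * th * th) by (apply Rmult_le_pos; [|lra]; apply Rmult_le_pos; [|lra]; nra).
     assert (E1 : 2 * INR n * (2 * (2 * X r * X r) * th * th / INR N) <= W * (2 * (2 * X r * X r * th * th)) / INR N).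
     { replace (2 * INR n * (2 * (2 * X r * X r) * th * th / INR N)) with ((2 * INR n * (2 * (2 * X r * X r * th * th))) / INR N) by (field; lra).
       unfold Rdiv. apply Rmult_le_compat_r. apply Rlt_le, Rinv_0_lt_compat; lra.
       unfold W. pose proof (pos_INR n). nra. }
     eapply Rle_trans; [exact E1|].
     apply Rmult_le_reg_r with (INR N); auto. unfold Rdiv. rewrite Rmult_assoc, Rinv_l, Rmult_1_r by lra.
     assert (E2 : 12 * W * (2 * X r * X r) * th * th / e * e = 12 * W * (2 * X r * X r) * th * th) by (field; lra).
     assert (HN1' : 1 <= INR N) by (replace 1 with (INR 1) by reflexivity; apply le_INR; lia).
     assert (12 * W * (2 * X r * X r) * th * th <= (INR N + 1) * e) by (rewrite <- E2; apply Rmult_le_compat_r; lra).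
     nra. }
   assert (T2 : 2 * INR n * (2 * e0 * th) < e / 3).
   { assert (E1 : 2 * INR n * (2 * e0 * th) <= W * 2 * e0 * th) by (unfold W; pose proof (pos_INR n); nra).
     assert (E2 : W * 2 * e0 * (th + 1) = e / 3) by (unfold e0; field; nra). nra. }
   assert (T3 : 2 * INR n * (INR N * eps * (4 * X r * L)) < e / 3).
   { assert (E1 : 2 * INR n * (INR N * eps * (4 * X r * L)) <= q * eps).
     { unfold q, W. pose proof (pos_INR n). pose proof (pos_INR N).
       assert (0 <= X r * L) by nra. assert (0 <= INR N * eps * (X r * L)) by (repeat apply Rmult_le_pos; lra). nra. }
     assert (E2 : q * eps <= q * (e / (3 * q + 3))) by (apply Rmult_le_compat_l; lra).
     assert (E3 : q * (e / (3 * q + 3)) < e / 3).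
     { apply Rmult_lt_reg_r with (3 * q + 3). lra.
       replace (q * (e / (3 * q + 3)) * (3 * q + 3)) with (q * e) by (field; lra). nra. }
     lra. }
   lra.
 - intros v0 Hv eps Heps a Hs tau Ht. apply (proj1 (Hk eps)). right. split; auto.
   exists v0, a, tau. split; [auto|split; [auto|split; auto]].
Qed.
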